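(* Let $k\ge2$, $L\ge3$, and let $T:\Pi_L\to\Sigma_k$ be the map constructed below (with $\Pi=\Pi_L$). If $y\in Trans(\Pi_L)$, then $\omega_\xi(T(y))=\omega_\xi(y)$ for each $\xi\in\{\overline d,\underline d,B^*,B_*\}$, and $\omega_\sigma(y)\subsetneq\omega_\sigma(T(y))$.
   Context: $\Sigma_k=\{0,\dots,k-1\}^{\mathbb{N}}$ with metric $d(x,y)=\sum_{n\ge1}\delta(x_n,y_n)/2^n$ ($\delta(a,b)=0$ if $a=b$, $1$ otherwise) and shift $\sigma$. $\Pi_L=\{x\in\Sigma_k:$ no $L$ consecutive symbols of $x$ are all equal$\}$; $Trans(\Pi_L)=\{y\in\Pi_L:\omega_\sigma(y)=\Pi_L\}$. A finite word is contained in $\Pi$ if it is a prefix of some point of $\Pi$. Construction of $T$: enumerate all finite words contained in $\Pi$ as $C_1,C_2,\dots$; fix a finite word $A_1$ not contained in $\Pi$; for $y\in\Pi$ let $Y_n$ be its first $n$ symbols; $B_n=C_nY_n\cdots Y_n$ ($Y_n$ repeated $|A_n|^2$ times), $A_{n+1}=A_nB_nA_n$; $T(y)$ is the point having every $A_n$ as prefix; the construction requires $|C_n|=o(|A_n|)$. $N(x,U)=\{n\ge1:\sigma^nx\in U\}$; $\overline d,\underline d$ are upper/lower asymptotic densities, $B^*,B_*$ Banach upper/lower densities; $\omega_\xi(x)=\{z:\xi(N(x,B_\varepsilon(z)))>0\ \forall\varepsilon>0\}$; $\omega_\sigma$ the $\omega$-limit set. *)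

(* Defs.v *)
From Stdlib Require Import Reals Lra Lia List Arith Classical ClassicalDescription.
From Coquelicot Require Import Coquelicot.
Open Scope R_scope.

(* Points of Sigma_k are sequences nat -> nat; index i (0-based) stands for
   the paper's coordinate x_{i+1}. *)
Definition seqn := nat -> nat.

Definition inSigma (k : nat) (x : seqn) : Prop := forall i, (x i < k)%nat.

Definition shift (x : seqn) : seqn := fun i => x (S i).
Definition shiftn (n : nat) (x : seqn) : seqn := fun i => x (i + n)%nat.

Definition delta (a b : nat) : R := if Nat.eq_dec a b then 0 else 1.
Definition dist (x y : seqn) : R :=
  Series (fun i => delta (x i) (y i) / 2 ^ (S i)).

Definition ball (z : seqn) (eps : R) (x : seqn) : Prop := dist x z < eps.

Definition PiL (k L : nat) (x : seqn) : Prop :=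
  inSigma k x /\ forall i, ~ (forall j, (j < L)%nat -> x (i + j)%nat = x i).

Definition word_in (P : seqn -> Prop) (w : list nat) : Prop :=
  exists x, P x /\ forall i, (i < length w)%nat -> x i = nth i w 0%nat.

Definition omega_sigma (x : seqn) (z : seqn) : Prop :=
  forall eps, 0 < eps -> forall N, exists n, (N <= n)%nat /\ dist (shiftn n x) z < eps.

Definition Trans (k L : nat) (y : seqn) : Prop :=
  PiL k L y /\ forall z, omega_sigma y z <-> PiL k L z.

Definition visits (x : seqn) (U : seqn -> Prop) (n : nat) : Prop :=
  (1 <= n)%nat /\ U (shiftn n x).

Definition indic (P : Prop) : R := if excluded_middle_informative P then 1 else 0.
Fixpoint cnt (A : nat -> Prop) (a n : nat) : R :=
  match n with
  | O => 0
  | S n' => indic (A (a + n')%nat) + cnt A a n'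
  end.

Inductive dens_kind := UpperD | LowerD | BanachUpper | BanachLower.

Definition density (xi : dens_kind) (A : nat -> Prop) : Rbar :=
  match xi with
  | UpperD => LimSup_seq (fun n => cnt A 1 (S n) / INR (S n))
  | LowerD => LimInf_seq (fun n => cnt A 1 (S n) / INR (S n))
  | BanachUpper =>
      Lim_seq (fun n => real (Sup_seq (fun m => cnt A (S m) (S n) / INR (S n))))
  | BanachLower =>
      Lim_seq (fun n => real (Inf_seq (fun m => cnt A (S m) (S n) / INR (S n))))
  end.

Definition omega_xi (k : nat) (xi : dens_kind) (x : seqn) (z : seqn) : Prop :=
  inSigma k z /\
  forall eps, 0 < eps -> Rbar_lt (Finite 0) (density xi (visits x (ball z eps))).

(* ---- construction of T ----
   C m is the paper's C_{m+1}; Aw C A1 y m is the paper's A_{m+1}. *)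
Definition prefixw (y : seqn) (n : nat) : list nat := map y (seq 0 n).

Fixpoint Aw (C : nat -> list nat) (A1 : list nat) (y : seqn) (m : nat) : list nat :=
  match m with
  | O => A1
  | S m' =>
      let a := Aw C A1 y m' in
      let b := C m' ++ concat (repeat (prefixw y (S m')) (length a * length a)) in
      a ++ b ++ a
  end.

(* T(y): the point having every A_n as a prefix (A_{i+2} has length > i) *)
Definition Tmap (C : nat -> list nat) (A1 : list nat) (y : seqn) : seqn :=
  fun i => nth i (Aw C A1 y (S i)) 0%nat.

(* Main.v *)
Require Import Defs.
From Stdlib Require Import Reals Lra Lia List Arith Classical ClassicalDescription.
From Coquelicot Require Import Coquelicot.
Open Scope R_scope.

Module All.
Open Scope R_scope.

Lemma indic_bounds (P : Prop) : 0 <= indic P <= 1.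
Proof. unfold indic; destruct excluded_middle_informative; lra. Qed.
Lemma indic_true (P : Prop) : P -> indic P = 1.
Proof. unfold indic; destruct excluded_middle_informative; tauto. Qed.
Lemma indic_false (P : Prop) : ~ P -> indic P = 0.
Proof. unfold indic; destruct excluded_middle_informative; tauto. Qed.

Lemma cnt_add A a n m : cnt A a (n + m) = cnt A a n + cnt A (a + n) m.
Proof.
  induction m as [|m IH]; simpl.
  - rewrite Nat.add_0_r; lra.
  - replace (n + S m)%nat with (S (n + m)) by lia. simpl. rewrite IH.
    replace (a + (n + m))%nat with (a + n + m)%nat by lia. lra.
Qed.

Lemma cnt_bounds A a n : 0 <= cnt A a n <= INR n.
Proof.
  induction n as [|n IH]; simpl; [lra|].
  rewrite ?S_INR. pose proof (indic_bounds (A (a+n)%nat)). destruct n; simpl in *; lra.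
Qed.

Lemma cnt_mono (A B : nat -> Prop) a n :
  (forall i, (i < n)%nat -> A (a + i)%nat -> B (a + i)%nat) -> cnt A a n <= cnt B a n.
Proof.
  induction n as [|n IH]; simpl; intros H; [lra|].
  assert (cnt A a n <= cnt B a n) by (apply IH; intros; apply H; [lia|assumption]).
  unfold indic at 1; destruct excluded_middle_informative.
  - rewrite indic_true by (apply H; [lia|assumption]). lra.
  - pose proof (indic_bounds (B (a+n)%nat)). lra.
Qed.

Lemma cnt_ext (A B : nat -> Prop) a b n :
  (forall i, (i < n)%nat -> (A (a + i)%nat <-> B (b + i)%nat)) -> cnt A a n = cnt B b n.
Proof.
  induction n as [|n IH]; simpl; intros H; [lra|].
  rewrite IH by (intros; apply H; lia).
  assert (HH := H n (Nat.lt_succ_diag_r n)).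
  unfold indic; do 2 destruct excluded_middle_informative; try lra; tauto.
Qed.

Lemma cnt_zero (A : nat -> Prop) a n :
  (forall i, (i < n)%nat -> ~ A (a + i)%nat) -> cnt A a n = 0.
Proof.
  induction n as [|n IH]; simpl; intros H; [lra|].
  rewrite IH by (intros; apply H; lia). rewrite indic_false by (apply H; lia). lra.
Qed.

Lemma cnt_len_mono A a n n' : (n <= n')%nat -> cnt A a n <= cnt A a n'.
Proof.
  intros H. replace n' with (n + (n' - n))%nat by lia. rewrite cnt_add.
  pose proof (cnt_bounds A (a+n) (n'-n)). lra.
Qed.

Lemma cnt_sub A a n a' n' : (a' <= a)%nat -> (a + n <= a' + n')%nat -> cnt A a n <= cnt A a' n'.
Proof.
  intros H1 H2. replace n' with ((a - a') + (n + (n' - (a - a') - n)))%nat by lia.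
  rewrite cnt_add, cnt_add. replace (a' + (a - a'))%nat with a by lia.
  pose proof (cnt_bounds A a' (a-a')). pose proof (cnt_bounds A (a+n) (n' - (a - a') - n)). lra.
Qed.

Lemma cnt_agree_le (A B : nat -> Prop) a b n d :
  (forall i, (i + d < n)%nat -> (A (a + i)%nat <-> B (b + i)%nat)) ->
  cnt A a n <= cnt B b n + INR d.
Proof.
  intros H. destruct (le_lt_dec n d) as [Hd|Hd].
  - pose proof (cnt_bounds A a n). pose proof (cnt_bounds B b n).
    apply le_INR in Hd. lra.
  - replace n with ((n - d) + d)%nat by lia. rewrite !cnt_add.
    rewrite (cnt_ext A B a b (n - d)) by (intros; apply H; lia).
    pose proof (cnt_bounds A (a + (n-d)) d). pose proof (cnt_bounds B (b + (n-d)) d). lra.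
Qed.

Lemma cnt_two A N a1 l1 a2 l2 : (a1 + l1 <= a2)%nat -> (a2 + l2 <= N)%nat ->
  cnt A a1 l1 + cnt A a2 l2 <= cnt A 0 N.
Proof.
  intros H1 H2.
  replace N with (a1 + (l1 + ((a2 - a1 - l1) + (l2 + (N - a2 - l2)))))%nat by lia.
  rewrite !cnt_add. simpl.
  replace (a1 + l1 + (a2 - a1 - l1))%nat with a2 by lia.
  pose proof (cnt_bounds A 0 a1). pose proof (cnt_bounds A (a1+l1) (a2 - a1 - l1)).
  pose proof (cnt_bounds A (a2 + l2) (N - a2 - l2)). lra.
Qed.
Definition geo (i : nat) : R := / 2 ^ (S i).

Lemma is_series_geo : is_series geo 1.
Proof.
  assert (H := is_series_geom (/2)).
  assert (Habs : Rabs (/2) < 1) by (rewrite Rabs_pos_eq; lra).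
  specialize (H Habs).
  apply (is_series_scal (/2)) in H.
  replace 1 with (scal (/2) (/ (1 - /2))).
  - eapply is_series_ext; [|exact H]. intros n. unfold geo, scal; simpl. unfold mult; simpl.
    rewrite pow_inv. rewrite Rinv_mult. ring.
  - unfold scal; simpl. unfold mult; simpl. field.
Qed.

Lemma ex_series_geo : ex_series geo.
Proof. exists 1. apply is_series_geo. Qed.

Lemma Series_geo : Series geo = 1.
Proof. apply is_series_unique, is_series_geo. Qed.

Definition dterm (x z : seqn) (i : nat) : R := delta (x i) (z i) / 2 ^ (S i).

Lemma geo_pos i : 0 < geo i.
Proof. unfold geo. apply Rinv_0_lt_compat, pow_lt; lra. Qed.

Lemma dterm_bounds x z i : 0 <= dterm x z i <= geo i.
Proof.
  pose proof (geo_pos i).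
  unfold dterm, geo, delta in *. destruct Nat.eq_dec; unfold Rdiv; lra.
Qed.

Lemma dterm_eq x z i : x i = z i -> dterm x z i = 0.
Proof. intros H. unfold dterm, delta. destruct Nat.eq_dec; [|tauto]. unfold Rdiv; ring. Qed.

Lemma dterm_neq x z i : x i <> z i -> dterm x z i = geo i.
Proof. intros H. unfold dterm, delta, geo. destruct Nat.eq_dec; [tauto|]. unfold Rdiv; ring. Qed.

Lemma ex_series_dterm x z : ex_series (dterm x z).
Proof.
  apply (ex_series_le (dterm x z) geo); [|apply ex_series_geo].
  intros n. pose proof (dterm_bounds x z n). unfold norm; simpl. unfold abs; simpl.
  rewrite Rabs_pos_eq; lra.
Qed.

Lemma dist_dterm x z : Defs.dist x z = Series (dterm x z).
Proof. reflexivity. Qed.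

Lemma Series_nonneg a : (forall n, 0 <= a n) -> ex_series a -> 0 <= Series a.
Proof.
  intros H Hex.
  assert (E : Series (fun n => 0 * a n) = 0) by (rewrite Series_scal_l; ring).
  rewrite <- E. apply Series_le; auto. intros; split; [lra|]. rewrite Rmult_0_l; auto.
Qed.

Lemma geo_shift M k : geo (M + k) = / 2 ^ M * geo k.
Proof. unfold geo. replace (S (M + k)) with (M + S k)%nat by lia. rewrite pow_add, Rinv_mult. ring. Qed.

Lemma dist_prefix_le x z M : (forall i, (i < M)%nat -> x i = z i) -> Defs.dist x z <= / 2 ^ M.
Proof.
  intros H. rewrite dist_dterm.
  rewrite (Series_incr_n_aux _ M) by (intros; apply dterm_eq, H; auto).
  apply Rle_trans with (Series (fun k => / 2 ^ M * geo k)).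
  - apply Series_le.
    + intros n. pose proof (dterm_bounds x z (M+n)). rewrite <- geo_shift. lra.
    + apply (ex_series_scal_l (/ 2 ^ M) geo), ex_series_geo.
  - rewrite Series_scal_l, Series_geo. lra.
Qed.

Lemma dist_nonneg x z : 0 <= Defs.dist x z.
Proof.
  rewrite dist_dterm. apply Series_nonneg; [|apply ex_series_dterm].
  intros; apply dterm_bounds.
Qed.

Lemma dist_diff_ge x z i : x i <> z i -> geo i <= Defs.dist x z.
Proof.
  intros H. rewrite dist_dterm. rewrite (Series_incr_n _ (S i)) by (lia || apply ex_series_dterm).
  simpl Init.Nat.pred.
  assert (T : 0 <= Series (fun k => dterm x z (S i + k))).
  { apply Series_nonneg. intros; apply dterm_bounds.
    apply (ex_series_incr_n (dterm x z) (S i)), ex_series_dterm. }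
  assert (S1 : geo i <= sum_f_R0 (dterm x z) i).
  { destruct i as [|j]; simpl.
    - rewrite dterm_neq by auto. lra.
    - rewrite (dterm_neq x z (S j)) by auto.
      pose proof (cond_pos_sum (dterm x z) j (fun n => proj1 (dterm_bounds x z n))). lra. }
  lra.
Qed.

Lemma geo_le_pow M i : (i < M)%nat -> / 2 ^ M <= geo i.
Proof.
  intros H. unfold geo. apply Rinv_le_contravar. apply pow_lt; lra.
  apply Rle_pow; [lra|lia].
Qed.

Lemma dist_lt_prefix x z M : Defs.dist x z < / 2 ^ M -> forall i, (i < M)%nat -> x i = z i.
Proof.
  intros H i Hi. destruct (Nat.eq_dec (x i) (z i)) as [e|n]; auto.
  pose proof (dist_diff_ge x z i n). pose proof (geo_le_pow M i Hi). lra.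
Qed.

Lemma pow2_inv_lt M : / 2 ^ S M < / 2 ^ M.
Proof.
  apply Rinv_lt_contravar. apply Rmult_lt_0_compat; apply pow_lt; lra.
  simpl. pose proof (pow_lt 2 M). lra.
Qed.

Lemma small_pow (eps : R) : 0 < eps -> exists M, / 2 ^ M < eps.
Proof.
  intros H. destruct (pow_lt_1_zero (/2) ltac:(rewrite Rabs_pos_eq; lra) eps H) as [N HN].
  exists N. specialize (HN N (Nat.le_refl N)). rewrite <- pow_inv. rewrite Rabs_pos_eq in HN; auto.
  apply pow_le; lra.
Qed.

Lemma Sup_seq_const (c : R) : Sup_seq (fun _ => Finite c) = c.
Proof.
  apply is_sup_seq_unique. simpl. intros eps. pose proof (cond_pos eps). split.
  - intros; simpl; lra.
  - exists 0%nat; simpl; lra.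
Qed.

Lemma Inf_seq_const (c : R) : Inf_seq (fun _ => Finite c) = c.
Proof.
  apply is_inf_seq_unique. simpl. intros eps. pose proof (cond_pos eps). split.
  - intros; simpl; lra.
  - exists 0%nat; simpl; lra.
Qed.

Lemma Inf_seq_le_term (u : nat -> R) n : Rbar_le (Inf_seq (fun m => Finite (u m))) (u n).
Proof.
  rewrite Inf_opp_sup. apply (proj1 (Rbar_opp_le _ _)). rewrite Rbar_opp_involutive.
  apply Sup_seq_minor_le with n. simpl. lra.
Qed.

Lemma Rbar_pos_of_le (x : Rbar) d : 0 < d -> Rbar_le d x -> Rbar_lt 0 x.
Proof. intros H1 H2. eapply Rbar_lt_le_trans; [|exact H2]. simpl; auto. Qed.

Lemma Rbar_notpos_of_le (x : Rbar) : (forall e, 0 < e -> Rbar_le x e) -> ~ Rbar_lt 0 x.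
Proof.
  intros H Hx. destruct x as [r| |]; simpl in *.
  - specialize (H (r/2)). simpl in H. assert (r <= r/2) by (apply H; lra). lra.
  - specialize (H 1 Rlt_0_1). simpl in H. auto.
  - auto.
Qed.

Lemma LS_pos_iff (u : nat -> R) :
  Rbar_lt 0 (LimSup_seq u) <-> exists d, 0 < d /\ forall N, exists n, (N <= n)%nat /\ d <= u n.
Proof.
  split.
  - intros H. apply NNPP. intros Hn. revert H. apply Rbar_notpos_of_le. intros e He.
    assert (Ev : eventually (fun n => u n <= (fun _ => e) n)).
    { apply NNPP. intros Hc. apply Hn. exists e. split; auto. intros N.
      apply NNPP. intros Hc2. apply Hc. exists N. intros n Hn2.
      apply Rnot_lt_le. intros Hl. apply Hc2. exists n. split; auto; lra. }
    pose proof (LimSup_le _ _ Ev) as L. rewrite LimSup_seq_const in L. exact L.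
  - intros [d [Hd H]]. apply (Rbar_pos_of_le _ d Hd).
    rewrite LimSup_InfSup_seq. rewrite <- (Inf_seq_const d).
    apply Inf_seq_le. intros m. destruct (H m) as [n [Hn1 Hn2]].
    apply Sup_seq_minor_le with (n - m)%nat. simpl. replace (n - m + m)%nat with n by lia. auto.
Qed.

Lemma LI_pos_iff (u : nat -> R) :
  Rbar_lt 0 (LimInf_seq u) <-> exists d, 0 < d /\ exists N, forall n, (N <= n)%nat -> d <= u n.
Proof.
  split.
  - intros H. apply NNPP. intros Hn. revert H. apply Rbar_notpos_of_le. intros e He.
    rewrite LimInf_SupInf_seq. rewrite <- (Sup_seq_const e). apply Sup_seq_le. intros m.
    assert (exists n, (m <= n)%nat /\ u n < e) as [n [Hn1 Hn2]].
    { apply NNPP. intros Hc. apply Hn. exists e. split; auto. exists m. intros n Hn1.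
      apply Rnot_lt_le. intros Hl. apply Hc. exists n; auto. }
    eapply Rbar_le_trans. apply (Inf_seq_le_term _ (n - m)%nat).
    simpl. replace (n - m + m)%nat with n by lia. lra.
  - intros [d [Hd [N H]]]. apply (Rbar_pos_of_le _ d Hd).
    rewrite <- (LimInf_seq_const d). apply LimInf_le. exists N. intros n Hn. apply H; auto.
Qed.

Lemma Lim_pos_of_ev (v : nat -> R) d : 0 < d -> (exists N, forall n, (N <= n)%nat -> d <= v n) ->
  Rbar_lt 0 (Lim_seq v).
Proof.
  intros Hd [N H]. apply (Rbar_pos_of_le _ d Hd).
  rewrite <- (Lim_seq_const d). apply Lim_seq_le_loc. exists N. intros n Hn. apply H; auto.
Qed.

Lemma Lim_notpos (v : nat -> R) : (forall e, 0 < e -> exists N, forall n, (N <= n)%nat -> v n <= e) ->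
  ~ Rbar_lt 0 (Lim_seq v).
Proof.
  intros H. apply Rbar_notpos_of_le. intros e He. destruct (H e He) as [N HN].
  rewrite <- (Lim_seq_const e). apply Lim_seq_le_loc. exists N. intros n Hn. apply HN; auto.
Qed.

Lemma Sup_fin (u : nat -> R) b : (forall m, 0 <= u m <= b) ->
  Sup_seq (fun m => Finite (u m)) = Finite (real (Sup_seq (fun m => Finite (u m)))).
Proof.
  intros H.
  assert (H1 : Rbar_le (Sup_seq (fun m => Finite (u m))) b).
  { rewrite <- (Sup_seq_const b). apply Sup_seq_le. intros; simpl; apply H. }
  assert (H2 : Rbar_le (u 0%nat) (Sup_seq (fun m => Finite (u m)))).
  { apply Sup_seq_minor_le with 0%nat. apply Rbar_le_refl. }
  destruct (Sup_seq (fun m => Finite (u m))); simpl in *; tauto.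
Qed.

Lemma real_Sup_ge (u : nat -> R) b m d : (forall m, 0 <= u m <= b) -> d <= u m ->
  d <= real (Sup_seq (fun m => Finite (u m))).
Proof.
  intros H Hd.
  assert (H2 : Rbar_le (u m) (Sup_seq (fun m => Finite (u m)))).
  { apply Sup_seq_minor_le with m. apply Rbar_le_refl. }
  rewrite (Sup_fin u b H) in H2. simpl in H2. lra.
Qed.

Lemma real_Sup_le (u : nat -> R) e : (forall m, 0 <= u m <= e) ->
  real (Sup_seq (fun m => Finite (u m))) <= e.
Proof.
  intros H.
  assert (H1 : Rbar_le (Sup_seq (fun m => Finite (u m))) e).
  { rewrite <- (Sup_seq_const e). apply Sup_seq_le. intros; simpl; apply H. }
  rewrite (Sup_fin u e H) in H1. simpl in H1. lra.
Qed.

Lemma real_Inf_le (u : nat -> R) m : (forall m, 0 <= u m) ->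
  real (Inf_seq (fun m => Finite (u m))) <= u m.
Proof.
  intros H.
  assert (H1 : Rbar_le (Inf_seq (fun m => Finite (u m))) (u m)) by apply Inf_seq_le_term.
  assert (H2 : Rbar_le 0 (Inf_seq (fun m => Finite (u m)))).
  { rewrite <- (Inf_seq_const 0). apply Inf_seq_le. intros; simpl; apply H. }
  destruct (Inf_seq (fun m => Finite (u m))); simpl in *; try tauto.
Qed.
Lemma length_concat_repeat (w : list nat) r : length (concat (repeat w r)) = (r * length w)%nat.
Proof. induction r; simpl; auto. rewrite length_app, IHr. lia. Qed.

Lemma nth_concat_repeat (w : list nat) R q r :
  (q < R)%nat -> (r < length w)%nat -> nth (q * length w + r) (concat (repeat w R)) 0%nat = nth r w 0%nat.
Proof.
  revert q. induction R as [|R IH]; intros q Hq Hr; [lia|]. simpl.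
  destruct q as [|q].
  - simpl. rewrite app_nth1 by lia. auto.
  - rewrite app_nth2 by (simpl; nia). replace (S q * length w + r - length w)%nat with (q * length w + r)%nat by (simpl; lia).
    apply IH; lia.
Qed.

Lemma length_prefixw y n : length (prefixw y n) = n.
Proof. unfold prefixw. rewrite length_map, length_seq. auto. Qed.

Lemma nth_prefixw y n r : (r < n)%nat -> nth r (prefixw y n) 0%nat = y r.
Proof.
  intros H. unfold prefixw.
  rewrite (nth_indep _ 0%nat (y 0%nat)) by (rewrite length_map, length_seq; auto).
  rewrite map_nth, seq_nth by auto. auto.
Qed.

Section Struct.
Local Open Scope nat_scope.
Variable C : nat -> list nat.
Variable A1 : list nat.
Variable y : seqn.

Definition PP n := length (Aw C A1 y n).
Definition cc n := length (C n).
Definition tt := Tmap C A1 y.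

Lemma Aw_S n : Aw C A1 y (S n) =
  Aw C A1 y n ++ (C n ++ concat (repeat (prefixw y (S n)) (PP n * PP n))) ++ Aw C A1 y n.
Proof. reflexivity. Qed.

Lemma PP_S n : PP (S n) = (PP n + (cc n + S n * (PP n * PP n)) + PP n)%nat.
Proof.
  unfold PP at 1. rewrite Aw_S, !length_app, length_concat_repeat, length_prefixw.
  unfold PP, cc. lia.
Qed.

Lemma Aw_prefix n m : (n <= m)%nat -> forall i, (i < PP n)%nat ->
  nth i (Aw C A1 y m) 0%nat = nth i (Aw C A1 y n) 0%nat.
Proof.
  intros H. induction H as [|m H IH]; intros i Hi; auto.
  rewrite Aw_S. rewrite app_nth1. apply IH; auto.
  unfold PP in *. pose proof (Nat.le_trans _ _ _ H (Nat.le_refl m)).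
  clear IH. induction H; auto. rewrite Aw_S, !length_app. unfold PP in IHle. lia.
Qed.

Lemma PP_mono n m : (n <= m)%nat -> (PP n <= PP m)%nat.
Proof. intros H; induction H; auto. rewrite PP_S. lia. Qed.

Hypothesis A1_ne : A1 <> nil.

Lemma PP_pos n : (1 <= PP n)%nat.
Proof.
  induction n. unfold PP; simpl. destruct A1; simpl; [congruence|lia].
  rewrite PP_S. lia.
Qed.

Lemma PP_gt n : (n < PP n)%nat.
Proof. induction n. apply PP_pos. rewrite PP_S. pose proof (PP_pos n). lia. Qed.

Lemma tt_prefix n i : (i < PP n)%nat -> tt i = nth i (Aw C A1 y n) 0%nat.
Proof.
  intros H. unfold tt, Tmap.
  destruct (le_lt_dec n (S i)) as [H1|H1].
  - apply Aw_prefix; auto.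
  - symmetry. apply Aw_prefix; [lia|]. pose proof (PP_gt (S i)); lia.
Qed.

Lemma tt_C n i : (i < cc n)%nat -> tt (PP n + i) = nth i (C n) 0%nat.
Proof.
  intros H. rewrite (tt_prefix (S n)) by (rewrite PP_S; lia).
  rewrite Aw_S. rewrite app_nth2 by (unfold PP; lia). unfold PP. rewrite Nat.add_comm, Nat.add_sub.
  rewrite app_nth1 by (rewrite length_app; unfold cc in H; lia).
  rewrite app_nth1 by auto. auto.
Qed.

Lemma tt_Y n q r : (q < PP n * PP n)%nat -> (r < S n)%nat ->
  tt (PP n + cc n + (q * S n + r)) = y r.
Proof.
  intros Hq Hr. rewrite (tt_prefix (S n)) by (rewrite PP_S; nia).
  rewrite Aw_S. rewrite app_nth2 by (unfold PP; lia).
  replace (PP n + cc n + (q * S n + r) - length (Aw C A1 y n))%nat with (cc n + (q * S n + r))%nat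
    by (unfold PP; lia).
  rewrite app_nth1 by (rewrite length_app, length_concat_repeat, length_prefixw; unfold cc; nia).
  rewrite app_nth2 by (unfold cc; lia).
  replace (cc n + (q * S n + r) - length (C n))%nat with (q * length (prefixw y (S n)) + r)%nat
    by (rewrite length_prefixw; unfold cc; lia).
  rewrite nth_concat_repeat by (rewrite ?length_prefixw; auto).
  apply nth_prefixw; auto.
Qed.

Lemma tt_A n i : (i < PP n)%nat -> tt (PP n + (cc n + S n * (PP n * PP n)) + i) = tt i.
Proof.
  intros H. rewrite (tt_prefix (S n)) by (rewrite PP_S; lia).
  rewrite (tt_prefix n) by auto.
  rewrite Aw_S. rewrite app_nth2 by (unfold PP; lia).
  rewrite app_nth2 by (rewrite length_app, length_concat_repeat, length_prefixw; unfold PP, cc; lia).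
  f_equal. rewrite length_app, length_concat_repeat, length_prefixw. unfold PP, cc. lia.
Qed.

End Struct.

End All.
Import All.

Module P4.
Open Scope R_scope.

Definition Occ (z : seqn) (K : nat) (x : seqn) (p : nat) : Prop :=
  forall i, (i < K)%nat -> x (p + i)%nat = z i.

Section Runs.
Variable C : nat -> list nat.
Variable A1 : list nat.
Variable y : seqn.
Variable z : seqn.
Variable K : nat.
Hypothesis A1_ne : A1 <> nil.

Notation t := (tt C A1 y).
Notation P := (PP C A1 y).
Notation c := cc.
Definition F N := cnt (Occ z K t) 0 N.
Definition G N := cnt (Occ z K y) 0 N.

Lemma run_equiv n q j : (q < P n * P n)%nat -> (j + K <= S n)%nat ->
  (Occ z K t (P n + cc C n + (q * S n + j)) <-> Occ z K y j).
Proof.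
  intros Hq Hj. unfold Occ. split; intros H i Hi.
  - rewrite <- H by auto. replace (P n + cc C n + (q * S n + j) + i)%nat
      with (P n + cc C n + (q * S n + (j + i)))%nat by lia. rewrite tt_Y; auto; lia.
  - rewrite <- H by auto. replace (P n + cc C n + (q * S n + j) + i)%nat
      with (P n + cc C n + (q * S n + (j + i)))%nat by lia. apply tt_Y; auto; lia.
Qed.

Lemma copy_bounds n q r : (q < P n * P n)%nat -> (r <= S n)%nat ->
  cnt (Occ z K t) (P n + cc C n + q * S n) r <= G r + INR K /\
  G r <= cnt (Occ z K t) (P n + cc C n + q * S n) r + INR K.
Proof.
  intros Hq Hr. unfold G. split; apply cnt_agree_le; intros i Hi.
  - rewrite <- Nat.add_assoc. simpl. apply run_equiv; auto; lia.
  - simpl. rewrite <- Nat.add_assoc. symmetry. apply run_equiv; auto; lia.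
Qed.

Lemma multi_bounds n q : (q <= P n * P n)%nat ->
  cnt (Occ z K t) (P n + cc C n) (q * S n) <= INR q * (G (S n) + INR K) /\
  INR q * (G (S n) - INR K) <= cnt (Occ z K t) (P n + cc C n) (q * S n).
Proof.
  induction q as [|q IH]; intros Hq.
  - simpl. lra.
  - replace (S q * S n)%nat with (q * S n + S n)%nat by lia. rewrite cnt_add.
    destruct (IH ltac:(lia)) as [I1 I2].
    destruct (copy_bounds n q (S n) ltac:(lia) ltac:(lia)) as [B1 B2].
    rewrite S_INR. split; nra.
Qed.

Lemma run_bounds n q r : (q <= P n * P n)%nat -> (r <= S n)%nat -> (q < P n * P n \/ r = 0)%nat ->
  cnt (Occ z K t) (P n + cc C n) (q * S n + r) <= INR q * (G (S n) + INR K) + G r + INR K /\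
  INR q * (G (S n) - INR K) + G r - INR K <= cnt (Occ z K t) (P n + cc C n) (q * S n + r).
Proof.
  intros Hq Hr Hor. rewrite cnt_add. destruct (multi_bounds n q Hq) as [M1 M2].
  destruct Hor as [Hor|Hor].
  - destruct (copy_bounds n q r Hor Hr) as [B1 B2]. split; lra.
  - subst r. assert (Z0 : forall A a, cnt A a 0 = 0) by reflexivity. unfold G in *. rewrite !Z0. pose proof (pos_INR K). lra.
Qed.

End Runs.

End P4.
Import P4.

Module P5.
Open Scope R_scope.

Lemma nat_above (x : R) : exists N : nat, x <= INR N.
Proof. destruct (INR_archimed 1 x) as [n Hn]; [lra|]. exists n; lra. Qed.

Section Dens.
Variable C : nat -> list nat.
Variable A1 : list nat.
Variable y : seqn.
Variable z : seqn.
Variable K : nat.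
Hypothesis A1_ne : A1 <> nil.
Hypothesis Hc : forall e, 0 < e -> exists N, forall n, (N <= n)%nat -> INR (cc C n) <= e * INR (PP C A1 y n).

Notation t := (tt C A1 y).
Notation P := (PP C A1 y).
Notation F := (F C A1 y z K).
Notation G := (G y z K).

Lemma level_find n0 M : (P n0 < M)%nat -> exists n, (n0 <= n)%nat /\ (P n < M <= P (S n))%nat.
Proof.
  intros H.
  assert (Hd : forall d, (M <= P (n0 + d))%nat -> exists n, (n0 <= n)%nat /\ (P n < M <= P (S n))%nat).
  { induction d as [|d IH]; intros Hd.
    - rewrite Nat.add_0_r in Hd. lia.
    - destruct (le_lt_dec M (P (n0 + d))) as [h|h]; auto.
      exists (n0 + d)%nat. split; [lia|]. replace (n0 + S d)%nat with (S (n0 + d)) in Hd by lia. lia. }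
  apply (Hd M). pose proof (PP_gt C A1 y A1_ne (n0 + M)). pose proof (PP_mono C A1 y M (n0+M) ltac:(lia)).
  pose proof (PP_gt C A1 y A1_ne M). lia.
Qed.

Lemma PP_S_R n : INR (P (S n)) = 2 * INR (P n) + INR (cc C n) + INR (S n) * (INR (P n) * INR (P n)).
Proof. rewrite PP_S, !plus_INR, !mult_INR. ring. Qed.

Lemma P_ge1 n : 1 <= INR (P n).
Proof. apply (le_INR 1). apply PP_pos; auto. Qed.

Lemma F_split3 n : F (P n + cc C n + S n * (P n * P n)) =
  F (P n) + cnt (Occ z K t) (P n) (cc C n) + cnt (Occ z K t) (P n + cc C n) (P n * P n * S n).
Proof.
  unfold P4.F. rewrite <- Nat.add_assoc, cnt_add, cnt_add. rewrite Nat.add_0_l.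
  replace (S n * (P n * P n))%nat with (P n * P n * S n)%nat by lia. ring.
Qed.

Lemma UE d : 0 < d -> (forall N, exists m, (N <= m)%nat /\ d * INR m <= G m) ->
  forall N, exists M, (N <= M)%nat /\ d / 4 * INR M <= F M.
Proof.
  intros Hd HG N.
  destruct (Hc 1 Rlt_0_1) as [N1 HN1].
  destruct (nat_above (2 * INR K / d)) as [N2 HN2].
  destruct (HG (N + N1 + N2 + 2)%nat) as [m [Hm1 Hm2]].
  destruct m as [|n]; [lia|].
  exists (P n + cc C n + S n * (P n * P n))%nat. split; [pose proof (PP_gt C A1 y A1_ne n); nia|].
  assert (Hsub : cnt (Occ z K t) (P n + cc C n) (P n * P n * S n) <= F (P n + cc C n + S n * (P n * P n))).
  { unfold P4.F. apply cnt_sub; lia. }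
  destruct (multi_bounds C A1 y z K A1_ne n (P n * P n) (Nat.le_refl _)) as [_ Mb].
  assert (c1 : INR (cc C n) <= INR (P n)) by (specialize (HN1 n ltac:(lia)); lra).
  pose proof (P_ge1 n) as P1.
  assert (m2 : 2 <= INR (S n)) by (apply (le_INR 2); lia).
  assert (mK : 2 * INR K <= d * INR (S n)).
  { assert (INR N2 <= INR (S n)) by (apply le_INR; lia).
    apply Rmult_le_compat_l with (r := d) in HN2; [|lra].
    replace (d * (2 * INR K / d)) with (2 * INR K) in HN2 by (field; lra). nra. }
  rewrite mult_INR in Mb.
  rewrite !plus_INR, !mult_INR.
  set (Pn := INR (P n)) in *. set (cn := INR (cc C n)) in *. set (p := INR (S n)) in *.
  assert (Hb : Pn * Pn * (d * p / 2) <= Pn * Pn * (G (S n) - INR K)).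
  { apply Rmult_le_compat_l; nra. }
  assert (Hc2 : 2 * Pn <= p * (Pn * Pn)) by nra.
  nra.
Qed.


Lemma G_nonneg m : 0 <= G m.
Proof. apply cnt_bounds. Qed.
Lemma F_nonneg m : 0 <= F m.
Proof. apply cnt_bounds. Qed.

Lemma divmod_run n l : (l <= S n * (P n * P n))%nat ->
  exists q r, l = (q * S n + r)%nat /\ (q <= P n * P n)%nat /\ (r <= S n)%nat /\
    (q < P n * P n \/ r = 0)%nat.
Proof.
  intros H. exists (l / S n)%nat, (l mod S n)%nat.
  pose proof (Nat.div_mod_eq l (S n)). pose proof (Nat.mod_upper_bound l (S n) ltac:(lia)).
  assert (Hq : (l / S n <= P n * P n)%nat).
  { apply Nat.div_le_upper_bound; lia. }
  split; [lia|]. split; auto. split; [lia|].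
  destruct (Nat.eq_dec (l / S n) (P n * P n)) as [e|e]; [right|left; lia].
  rewrite e in *. nia.
Qed.

Lemma run_upper a b n l : 0 <= a -> (forall m, G m <= a * INR m + b) -> (l <= S n * (P n * P n))%nat ->
  exists q, INR q * INR (S n) <= INR l /\
    cnt (Occ z K t) (P n + cc C n) l <= a * INR l + (INR q + 1) * (b + INR K).
Proof.
  intros Ha HG Hl. destruct (divmod_run n l Hl) as [q [r [E [H1 [H2 H3]]]]].
  exists q. split. { rewrite <- mult_INR. apply le_INR. lia. }
  destruct (run_bounds C A1 y z K A1_ne n q r H1 H2 H3) as [U _]. rewrite <- E in U.
  pose proof (HG (S n)). pose proof (HG r). pose proof (pos_INR q).
  assert (El : INR l = INR q * INR (S n) + INR r) by (rewrite E, plus_INR, mult_INR; ring).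
  nra.
Qed.

Lemma run_lower a b n l : 0 <= a -> (forall m, a * INR m - b <= G m) -> (l <= S n * (P n * P n))%nat ->
  exists q, INR q * INR (S n) <= INR l /\
    a * INR l - (INR q + 1) * (b + INR K) <= cnt (Occ z K t) (P n + cc C n) l.
Proof.
  intros Ha HG Hl. destruct (divmod_run n l Hl) as [q [r [E [H1 [H2 H3]]]]].
  exists q. split. { rewrite <- mult_INR. apply le_INR. lia. }
  destruct (run_bounds C A1 y z K A1_ne n q r H1 H2 H3) as [_ U]. rewrite <- E in U.
  pose proof (HG (S n)). pose proof (HG r). pose proof (pos_INR q).
  assert (El : INR l = INR q * INR (S n) + INR r) by (rewrite E, plus_INR, mult_INR; ring).
  nra.
Qed.

Lemma LE : (forall e, 0 < e -> forall N, exists m, (N <= m)%nat /\ G m <= e * INR m + 1) ->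
  forall e, 0 < e -> forall N, exists M, (N <= M)%nat /\ F M <= e * INR M.
Proof.
  intros HG e He N.
  destruct (Hc 1 Rlt_0_1) as [N1 HN1].
  destruct (nat_above (8 / e + 4 * (1 + INR K) / e)) as [N2 HN2].
  destruct (HG (e/4) ltac:(lra) (N + N1 + N2 + 2)%nat) as [m [Hm1 Hm2]].
  destruct m as [|n]; [lia|].
  exists (P n + cc C n + S n * (P n * P n))%nat. split; [pose proof (PP_gt C A1 y A1_ne n); nia|].
  rewrite F_split3.
  destruct (multi_bounds C A1 y z K A1_ne n (P n * P n) (Nat.le_refl _)) as [Mb _].
  assert (c1 : INR (cc C n) <= INR (P n)) by (specialize (HN1 n ltac:(lia)); lra).
  pose proof (P_ge1 n) as P1.
  pose proof (cnt_bounds (Occ z K t) 0 (P n)) as B1.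
  pose proof (cnt_bounds (Occ z K t) (P n) (cc C n)) as B2.
  assert (Hp : INR N2 <= INR (S n)) by (apply le_INR; lia).
  assert (e8 : 8 <= e * INR (S n)).
  { assert (8 / e <= INR (S n)). { assert (0 <= 4 * (1 + INR K) / e).
      { apply Rmult_le_pos; [pose proof (pos_INR K); lra| left; apply Rinv_0_lt_compat; lra]. } lra. }
    apply Rmult_le_compat_l with (r := e) in H; [|lra].
    replace (e * (8 / e)) with 8 in H by (field; lra). lra. }
  assert (eK : 4 * (1 + INR K) <= e * INR (S n)).
  { assert (4 * (1 + INR K) / e <= INR (S n)). { assert (0 <= 8 / e).
      { apply Rmult_le_pos; [lra| left; apply Rinv_0_lt_compat; lra]. } lra. }
    apply Rmult_le_compat_l with (r := e) in H; [|lra].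
    replace (e * (4 * (1 + INR K) / e)) with (4 * (1 + INR K)) in H by (field; lra). lra. }
  unfold P4.F in *.
  rewrite mult_INR in Mb. rewrite !plus_INR, !mult_INR.
  set (Pn := INR (P n)) in *. set (cn := INR (cc C n)) in *. set (p := INR (S n)) in *.
  set (X := cnt (Occ z K t) (P n + cc C n) (P n * P n * S n)) in *.
  assert (R1 : X <= Pn * Pn * (e / 4 * p + 1 + INR K)).
  { apply Rle_trans with (Pn * Pn * (G (S n) + INR K)); auto. apply Rmult_le_compat_l; nra. }
  assert (R2 : 2 * Pn <= e / 4 * p * (Pn * Pn)) by nra.
  assert (R3 : Pn * Pn * (1 + INR K) <= e / 4 * p * (Pn * Pn)) by nra.
  assert (0 <= cn) by apply pos_INR.
  nra.
Qed.


Lemma F_split_E n : F (P (S n)) = F (P n + cc C n + S n * (P n * P n)) +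
  cnt (Occ z K t) (P n + cc C n + S n * (P n * P n)) (P n).
Proof. unfold P4.F. rewrite PP_S. replace (P n + (cc C n + S n * (P n * P n)) + P n)%nat with ((P n + cc C n + S n * (P n * P n)) + P n)%nat by lia. rewrite cnt_add. reflexivity. Qed.

Lemma lemmaB a b : 0 < a -> 0 <= b -> (forall m, G m <= a * INR m + b) ->
  exists n1, forall n, (n1 <= n)%nat -> F (P (S n)) <= 3 * a * INR (P (S n)).
Proof.
  intros Ha Hb HG.
  destruct (Hc 1 Rlt_0_1) as [N1 HN1].
  destruct (nat_above (3 / a + (b + INR K) / a)) as [N2 HN2].
  exists (N1 + N2)%nat. intros n Hn.
  rewrite F_split_E, F_split3.
  destruct (multi_bounds C A1 y z K A1_ne n (P n * P n) (Nat.le_refl _)) as [Mb _].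
  assert (c1 : INR (cc C n) <= INR (P n)) by (specialize (HN1 n ltac:(lia)); lra).
  pose proof (P_ge1 n) as P1.
  pose proof (cnt_bounds (Occ z K t) 0 (P n)) as B1.
  pose proof (cnt_bounds (Occ z K t) (P n) (cc C n)) as B2.
  pose proof (cnt_bounds (Occ z K t) (P n + cc C n + S n * (P n * P n)) (P n)) as B3.
  assert (Hp : INR N2 <= INR (S n)) by (apply le_INR; lia).
  assert (0 <= 3 / a) by (apply Rmult_le_pos; [lra|left; apply Rinv_0_lt_compat; lra]).
  assert (0 <= (b + INR K) / a) by (apply Rmult_le_pos; [pose proof (pos_INR K); lra|left; apply Rinv_0_lt_compat; lra]).
  assert (e3 : 3 <= a * INR (S n)).
  { assert (3 / a <= INR (S n)) by lra.
    apply Rmult_le_compat_l with (r := a) in H1; [|lra].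
    replace (a * (3 / a)) with 3 in H1 by (field; lra). lra. }
  assert (eK : b + INR K <= a * INR (S n)).
  { assert ((b + INR K) / a <= INR (S n)) by lra.
    apply Rmult_le_compat_l with (r := a) in H1; [|lra].
    replace (a * ((b + INR K) / a)) with (b + INR K) in H1 by (field; lra). lra. }
  rewrite PP_S_R. unfold P4.F in *.
  rewrite mult_INR in Mb.
  set (Pn := INR (P n)) in *. set (cn := INR (cc C n)) in *. set (p := INR (S n)) in *.
  set (X := cnt (Occ z K t) (P n + cc C n) (P n * P n * S n)) in *.
  pose proof (HG (S n)) as HGp. fold p in HGp.
  assert (R1 : X <= Pn * Pn * (a * p + b + INR K)).
  { apply Rle_trans with (Pn * Pn * (G (S n) + INR K)); auto. apply Rmult_le_compat_l; nra. }
  assert (R2 : 3 * Pn <= a * p * (Pn * Pn)) by nra.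
  assert (R3 : Pn * Pn * (b + INR K) <= a * p * (Pn * Pn)) by nra.
  assert (0 <= cn) by apply pos_INR.
  nra.
Qed.

Lemma UH : (forall e, 0 < e -> exists b, forall m, G m <= e * INR m + b) ->
  forall e, 0 < e -> exists N0, forall M, (N0 <= M)%nat -> F M <= e * INR M.
Proof.
  intros HG e He. set (a := e / 8).
  assert (Ha : 0 < a) by (unfold a; lra). assert (Hea : e = 8 * a) by (unfold a; lra). clearbody a.
  destruct (HG a Ha) as [b Hb].
  assert (b0 : 0 <= b) by (pose proof (Hb 0%nat); simpl in *; unfold P4.G in *; simpl in *; lra).
  destruct (lemmaB a b Ha b0 Hb) as [n1 Hn1].
  destruct (Hc a Ha) as [N1 HN1].
  destruct (Hc 1 Rlt_0_1) as [N1' HN1'].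
  destruct (nat_above (3 / a + (b + INR K) / a)) as [N2 HN2].
  exists (S (P (n1 + N1 + N1' + N2 + 1))). intros M HM.
  destruct (level_find (n1 + N1 + N1' + N2 + 1) M ltac:(lia)) as [n [Hn [HM1 HM2]]].
  destruct n as [|n']; [lia|]. set (n := S n') in *.
  assert (FB : F (P n) <= 3 * a * INR (P n)) by (apply Hn1; lia).
  assert (c1 : INR (cc C n) <= a * INR (P n)) by (apply HN1; lia).
  assert (c1' : INR (cc C n) <= INR (P n)) by (specialize (HN1' n ltac:(lia)); lra).
  pose proof (P_ge1 n) as P1.
  assert (Hp : INR N2 <= INR (S n)) by (apply le_INR; lia).
  assert (HpP : INR (S n) <= INR (P n)) by (apply le_INR; apply (PP_gt C A1 y A1_ne n)).
  assert (0 <= 3 / a) by (apply Rmult_le_pos; [lra|left; apply Rinv_0_lt_compat; lra]).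
  assert (0 <= (b + INR K) / a) by (apply Rmult_le_pos; [pose proof (pos_INR K); lra|left; apply Rinv_0_lt_compat; lra]).
  assert (e3 : 3 <= a * INR (S n)).
  { assert (3 / a <= INR (S n)) by lra.
    apply Rmult_le_compat_l with (r := a) in H1; [|lra].
    replace (a * (3 / a)) with 3 in H1 by (field; lra). lra. }
  assert (eK : b + INR K <= a * INR (S n)).
  { assert ((b + INR K) / a <= INR (S n)) by lra.
    apply Rmult_le_compat_l with (r := a) in H1; [|lra].
    replace (a * ((b + INR K) / a)) with (b + INR K) in H1 by (field; lra). lra. }
  pose proof (pos_INR K) as K0.
  destruct (le_lt_dec M (P n + cc C n)) as [C1|C1].
  -
    replace M with (P n + (M - P n))%nat by lia. unfold P4.F. rewrite cnt_add.
    pose proof (cnt_bounds (Occ z K t) (0 + P n) (M - P n)) as B.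
    assert (INR (M - P n) <= INR (cc C n)) by (apply le_INR; lia).
    assert (INR (P n) <= INR (P n + (M - P n))) by (apply le_INR; lia).
    unfold P4.F in FB. nra.
  - destruct (le_lt_dec M (P n + cc C n + S n * (P n * P n))) as [C2|C2].
    +
      set (l := (M - (P n + cc C n))%nat).
      destruct (run_upper a b n l (Rlt_le _ _ Ha) Hb ltac:(unfold l; lia)) as [q [Hq1 Hq2]].
      replace M with (P n + (cc C n + l))%nat by (unfold l; lia). unfold P4.F. rewrite !cnt_add.
      replace (0 + P n + cc C n)%nat with (P n + cc C n)%nat by lia.
      pose proof (cnt_bounds (Occ z K t) (0 + P n) (cc C n)) as B.
      unfold P4.F in FB. rewrite !plus_INR.
      set (Pn := INR (P n)) in *. set (cn := INR (cc C n)) in *. set (p := INR (S n)) in *.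
      pose proof (pos_INR l). pose proof (pos_INR q).
      assert (Q1 : INR q * (b + INR K) <= a * INR l) by nra.
      assert (Q2 : b + INR K <= a * Pn) by nra.
      nra.
    +
      set (E := (P n + cc C n + S n * (P n * P n))%nat) in *.
      replace M with (E + (M - E))%nat by lia. unfold P4.F. rewrite cnt_add.
      pose proof (cnt_bounds (Occ z K t) (0 + E) (M - E)) as B.
      assert (ME : (M - E <= P n)%nat) by (rewrite PP_S in HM2; unfold E; lia).
      apply le_INR in ME.
      fold (F E). unfold E. rewrite F_split3.
      destruct (multi_bounds C A1 y z K A1_ne n (P n * P n) (Nat.le_refl _)) as [Mb _].
      pose proof (cnt_bounds (Occ z K t) (P n) (cc C n)) as B2.
      assert (HME : INR (S n) * (INR (P n) * INR (P n)) <= INR M).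
      { rewrite <- !mult_INR. apply le_INR. unfold E in C2. lia. }
      fold E. unfold P4.F in FB. rewrite mult_INR in Mb.
      set (Pn := INR (P n)) in *. set (cn := INR (cc C n)) in *. set (p := INR (S n)) in *.
      set (X := cnt (Occ z K t) (P n + cc C n) (P n * P n * S n)) in *.
      pose proof (Hb (S n)) as HGp. fold p in HGp.
      assert (R1 : X <= Pn * Pn * (a * p + b + INR K)).
      { apply Rle_trans with (Pn * Pn * (G (S n) + INR K)); auto. apply Rmult_le_compat_l; nra. }
      assert (R2 : Pn <= a * p * (Pn * Pn)) by nra.
      assert (R3 : Pn * Pn * (b + INR K) <= a * p * (Pn * Pn)) by nra.
      assert (p1 : 1 <= p) by (unfold p; rewrite S_INR; pose proof (pos_INR n); lra).
      assert (R4' : Pn <= Pn * Pn) by nra.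
      assert (R4'' : Pn * Pn <= p * (Pn * Pn)) by nra.
      assert (R4 : Pn <= p * (Pn * Pn)) by lra.
      assert (R5 : a * Pn <= a * (p * (Pn * Pn))) by (apply Rmult_le_compat_l; lra).
      assert (R6 : a * (p * (Pn * Pn)) <= a * INR M) by (apply Rmult_le_compat_l; lra).
      replace (E + (M - E))%nat with M by lia. unfold P4.F. subst e. lra.
Qed.


Lemma lemmaA d b : 0 < d -> 0 <= b -> (forall m, d * INR m - b <= G m) ->
  exists n1, forall n, (n1 <= n)%nat ->
    d / 2 * (INR (S n) * (INR (P n) * INR (P n))) <= cnt (Occ z K t) (P n + cc C n) (P n * P n * S n) /\
    d / 4 * INR (P (S n)) <= F (P (S n)).
Proof.
  intros Hd Hb HG.
  destruct (Hc 1 Rlt_0_1) as [N1 HN1].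
  destruct (nat_above (3 + 2 * (b + INR K) / d)) as [N2 HN2].
  exists (N1 + N2)%nat. intros n Hn.
  destruct (multi_bounds C A1 y z K A1_ne n (P n * P n) (Nat.le_refl _)) as [_ Mb].
  assert (c1 : INR (cc C n) <= INR (P n)) by (specialize (HN1 n ltac:(lia)); lra).
  pose proof (P_ge1 n) as P1.
  assert (Hp : INR N2 <= INR (S n)) by (apply le_INR; lia).
  assert (0 <= 2 * (b + INR K) / d) by (apply Rmult_le_pos; [pose proof (pos_INR K); lra|left; apply Rinv_0_lt_compat; lra]).
  assert (p3 : 3 <= INR (S n)) by lra.
  assert (eK : 2 * (b + INR K) <= d * INR (S n)).
  { assert (2 * (b + INR K) / d <= INR (S n)) by lra.
    apply Rmult_le_compat_l with (r := d) in H0; [|lra].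
    replace (d * (2 * (b + INR K) / d)) with (2 * (b + INR K)) in H0 by (field; lra). lra. }
  assert (Hsub : cnt (Occ z K t) (P n + cc C n) (P n * P n * S n) <= F (P (S n))).
  { unfold P4.F. apply cnt_sub; [lia|]. rewrite PP_S. lia. }
  rewrite mult_INR in Mb. rewrite PP_S_R.
  set (Pn := INR (P n)) in *. set (cn := INR (cc C n)) in *. set (p := INR (S n)) in *.
  set (X := cnt (Occ z K t) (P n + cc C n) (P n * P n * S n)) in *.
  pose proof (HG (S n)) as HGp. fold p in HGp.
  assert (R1 : Pn * Pn * (d * p - b - INR K) <= X).
  { apply Rle_trans with (Pn * Pn * (G (S n) - INR K)); auto. apply Rmult_le_compat_l; nra. }
  assert (R2 : d / 2 * (p * (Pn * Pn)) <= X).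
  { assert (Pn * Pn * (d * p / 2) <= Pn * Pn * (d * p - b - INR K)) by (apply Rmult_le_compat_l; nra). nra. }
  split; auto.
  assert (R3 : 3 * Pn <= p * (Pn * Pn)) by nra.
  assert (R4 : d * Pn <= d / 3 * (p * (Pn * Pn))) by nra.
  assert (R5 : d * cn <= d * Pn) by (apply Rmult_le_compat_l; lra).
  lra.
Qed.

Lemma LH d b : 0 < d -> (forall m, d * INR m - b <= G m) ->
  exists d', 0 < d' /\ exists N0, forall M, (N0 <= M)%nat -> d' * INR M <= F M.
Proof.
  intros Hd HG0.
  set (b' := Rmax b 0).
  assert (Hb : 0 <= b') by apply Rmax_r.
  assert (HG : forall m, d * INR m - b' <= G m) by (intros m; pose proof (HG0 m); pose proof (Rmax_l b 0); unfold b'; lra).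
  clearbody b'. clear HG0 b. rename b' into b.
  destruct (lemmaA d b Hd Hb HG) as [n1 Hn1].
  destruct (Hc 1 Rlt_0_1) as [N1 HN1].
  destruct (nat_above (3 + 16 * (b + INR K) / d + 2 * (b + INR K) / d)) as [N2 HN2].
  exists (d / 16). split; [lra|].
  exists (S (P (n1 + N1 + N2 + 1))). intros M HM.
  destruct (level_find (n1 + N1 + N2 + 1) M ltac:(lia)) as [n [Hn [HM1 HM2]]].
  destruct n as [|n']; [lia|].
  destruct (Hn1 n' ltac:(lia)) as [_ FB].
  set (n := S n') in *.
  assert (c1 : INR (cc C n) <= INR (P n)) by (specialize (HN1 n ltac:(lia)); lra).
  pose proof (P_ge1 n) as P1.
  assert (Hp : INR N2 <= INR (S n)) by (apply le_INR; lia).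
  assert (HpP : INR (S n) <= INR (P n)) by (apply le_INR; apply (PP_gt C A1 y A1_ne n)).
  pose proof (pos_INR K) as K0.
  assert (0 <= 2 * (b + INR K) / d) by (apply Rmult_le_pos; [lra|left; apply Rinv_0_lt_compat; lra]).
  assert (0 <= 16 * (b + INR K) / d) by (apply Rmult_le_pos; [lra|left; apply Rinv_0_lt_compat; lra]).
  assert (eK : 2 * (b + INR K) <= d * INR (S n)).
  { assert (2 * (b + INR K) / d <= INR (S n)) by lra.
    apply Rmult_le_compat_l with (r := d) in H1; [|lra].
    replace (d * (2 * (b + INR K) / d)) with (2 * (b + INR K)) in H1 by (field; lra). lra. }
  assert (eK2 : 16 * (b + INR K) <= d * INR (P n)).
  { assert (16 * (b + INR K) / d <= INR (P n)) by lra.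
    apply Rmult_le_compat_l with (r := d) in H1; [|lra].
    replace (d * (16 * (b + INR K) / d)) with (16 * (b + INR K)) in H1 by (field; lra). lra. }
  assert (HMP : INR (P n) <= INR M) by (apply le_INR; lia).
  destruct (le_lt_dec M (P n + cc C n)) as [C1|C1].
  - assert (F (P n) <= F M) by (unfold P4.F; apply cnt_len_mono; lia).
    assert (INR M <= INR (P n) + INR (cc C n)) by (rewrite <- plus_INR; apply le_INR; lia).
    fold n in FB.
    assert (d * INR M <= d * (2 * INR (P n))) by (apply Rmult_le_compat_l; lra). lra.
  - destruct (le_lt_dec M (P n + cc C n + S n * (P n * P n))) as [C2|C2].
    + set (l := (M - (P n + cc C n))%nat).
      destruct (run_lower d b n l (Rlt_le _ _ Hd) HG ltac:(unfold l; lia)) as [q [Hq1 Hq2]].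
      assert (EM : M = (P n + (cc C n + l))%nat) by (unfold l; lia).
      assert (FM : F (P n) + cnt (Occ z K t) (P n + cc C n) l <= F M).
      { rewrite EM. unfold P4.F. rewrite !cnt_add. replace (0 + P n + cc C n)%nat with (P n + cc C n)%nat by lia.
        simpl. pose proof (cnt_bounds (Occ z K t) (P n) (cc C n)). lra. }
      assert (INR M = INR (P n) + INR (cc C n) + INR l) by (rewrite EM, !plus_INR; ring).
      fold n in FB.
      set (Pn := INR (P n)) in *. set (cn := INR (cc C n)) in *. set (p := INR (S n)) in *.
      pose proof (pos_INR l). pose proof (pos_INR q).
      assert (Q1 : INR q * (b + INR K) <= d / 2 * INR l) by nra.
      assert (R5 : d * cn <= d * Pn) by (apply Rmult_le_compat_l; lra).
      assert (0 <= d * INR l) by (apply Rmult_le_pos; lra). rewrite H1. lra.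
    + destruct (Hn1 n ltac:(lia)) as [FE _].
      assert (Hs : cnt (Occ z K t) (P n + cc C n) (P n * P n * S n) <= F M).
      { unfold P4.F. apply cnt_sub; lia. }
      assert (INR M <= INR (P (S n))) by (apply le_INR; lia).
      rewrite PP_S_R in H1.
      set (Pn := INR (P n)) in *. set (cn := INR (cc C n)) in *. set (p := INR (S n)) in *.
      assert (p3 : 3 <= p) by lra.
      assert (R3a : 3 * Pn <= p * Pn) by nra.
      assert (R3b : Pn <= Pn * Pn) by nra.
      assert (R3c : p * Pn <= p * (Pn * Pn)) by nra.
      assert (R3 : 3 * Pn <= p * (Pn * Pn)) by lra.
      assert (R4 : d * Pn <= d / 3 * (p * (Pn * Pn))) by nra.
      assert (R5 : d * cn <= d * Pn) by (apply Rmult_le_compat_l; lra).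
      assert (R6 : d * INR M <= d * (2 * Pn + cn + p * (Pn * Pn))) by (apply Rmult_le_compat_l; lra).
      lra.
Qed.

End Dens.

End P5.
Import P5.

Module P6.
Open Scope R_scope.

Section Win.
Variable C : nat -> list nat.
Variable A1 : list nat.
Variable y : seqn.
Variable z : seqn.
Variable K' : nat.
Hypothesis A1_ne : A1 <> nil.

Notation K := (S K').
Notation t := (tt C A1 y).
Notation P := (PP C A1 y).
Notation O := (Occ z K t).

Definition Int a m := cnt O a (m - K').

Lemma Int_split a m1 m2 : Int a (m1 + m2) <= Int a m1 + Int (a + m1) m2 + INR K'.
Proof.
  unfold Int. destruct (le_lt_dec K' m1) as [h|h].
  - replace (m1 + m2 - K')%nat with ((m1 - K') + m2)%nat by lia. rewrite cnt_add.
    replace (a + (m1 - K'))%nat with (a + m1 - K')%nat by lia.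
    destruct (le_lt_dec K' m2) as [h2|h2].
    + replace m2 with (K' + (m2 - K'))%nat at 1 by lia. rewrite cnt_add.
      replace (a + m1 - K' + K')%nat with (a + m1)%nat by lia.
      pose proof (cnt_bounds O (a + m1 - K') K'). lra.
    + pose proof (cnt_bounds O (a + m1 - K') m2). pose proof (cnt_bounds O (a + m1) (m2 - K')).
      assert (INR m2 <= INR K') by (apply le_INR; lia). lra.
  - apply Rle_trans with (cnt O a (m1 + (m2 - K'))). apply cnt_len_mono; lia.
    rewrite cnt_add. pose proof (cnt_bounds O a m1). pose proof (cnt_bounds O a (m1 - K')).
    assert (INR m1 <= INR K') by (apply le_INR; lia). lra.
Qed.

Lemma Int_bounds a m : 0 <= Int a m <= INR m.
Proof.
  unfold Int. pose proof (cnt_bounds O a (m - K')). assert (INR (m - K') <= INR m) by (apply le_INR; lia). lra.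
Qed.

Lemma Int_mono a m a' m' : (a' <= a)%nat -> (a + m <= a' + m')%nat -> Int a m <= Int a' m'.
Proof.
  intros H1 H2. unfold Int. destruct (le_lt_dec m K') as [h|h].
  - replace (m - K')%nat with 0%nat by lia. simpl. apply cnt_bounds.
  - apply cnt_sub; lia.
Qed.

Lemma Int_local a b m : (forall i, (i < m)%nat -> t (a + i)%nat = t (b + i)%nat) -> Int a m = Int b m.
Proof.
  intros H. unfold Int. apply cnt_ext. intros i Hi. unfold Occ. split; intros H' j Hj.
  - rewrite <- H'; auto. rewrite <- !Nat.add_assoc. symmetry. apply H. lia.
  - rewrite <- H'; auto. rewrite <- !Nat.add_assoc. apply H. lia.
Qed.

Lemma Int_zero a m : (forall i, (i + K <= m)%nat -> ~ O (a + i)) -> Int a m = 0.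
Proof. intros H. unfold Int. apply cnt_zero. intros i Hi. apply H. lia. Qed.

Hypothesis NY : forall j, ~ Occ z K y j.
Hypothesis NC : forall n i, (i + K <= cc C n)%nat -> ~ O (P n + i).

Lemma Int_copy n q : (q < P n * P n)%nat -> Int (P n + cc C n + q * S n) (S n) = 0.
Proof.
  intros Hq. apply Int_zero. intros i Hi HO. apply (NY i).
  apply (run_equiv C A1 y z K A1_ne n q i Hq ltac:(lia)). rewrite <- Nat.add_assoc in HO. exact HO.
Qed.

Lemma Int_aligned n q0 Q : (q0 + Q <= P n * P n)%nat ->
  Int (P n + cc C n + q0 * S n) (Q * S n) <= INR K' * INR Q.
Proof.
  revert q0. induction Q as [|Q IH]; intros q0 H.
  - simpl. unfold Int. simpl. lra.
  - replace (S Q * S n)%nat with (S n + Q * S n)%nat by lia.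
    eapply Rle_trans; [apply Int_split|].
    rewrite Int_copy by lia.
    replace (P n + cc C n + q0 * S n + S n)%nat with (P n + cc C n + S q0 * S n)%nat by lia.
    specialize (IH (S q0) ltac:(lia)). rewrite S_INR. lra.
Qed.

Lemma Int_run n a m : (P n + cc C n <= a)%nat -> (a + m <= P n + cc C n + S n * (P n * P n))%nat ->
  Int a m <= INR K' * INR m / INR (S n) + 2 * INR K'.
Proof.
  intros H1 H2. set (s := (P n + cc C n)%nat) in *.
  set (q0 := ((a - s) / S n)%nat).
  set (Q := ((a + m - s + S n - 1) / S n - q0)%nat).
  pose proof (Nat.div_mod_eq (a - s) (S n)) as D1. pose proof (Nat.mod_upper_bound (a - s) (S n) ltac:(lia)) as D2.
  pose proof (Nat.div_mod_eq (a + m - s + S n - 1) (S n)) as D3.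
  pose proof (Nat.mod_upper_bound (a + m - s + S n - 1) (S n) ltac:(lia)) as D4.
  fold q0 in D1.
  set (q1 := ((a + m - s + S n - 1) / S n)%nat) in *.
  assert (Hq1 : (q1 <= P n * P n)%nat).
  { assert (q1 < S (P n * P n))%nat; [|lia]. unfold q1. apply Nat.div_lt_upper_bound; nia. }
  assert (Hq01 : (q0 <= q1)%nat).
  { unfold q0, q1. apply Nat.div_le_mono; lia. }
  assert (HQ : Q = (q1 - q0)%nat) by reflexivity.
  assert (Hm1 : Int a m <= Int (s + q0 * S n) (Q * S n)).
  { apply Int_mono; nia. }
  pose proof (Int_aligned n q0 Q ltac:(lia)) as Ha. fold s in Ha.
  assert (HQm : INR Q * INR (S n) <= INR m + 2 * INR (S n)).
  { rewrite <- mult_INR. replace (INR m + 2 * INR (S n)) with (INR (m + 2 * S n)) by (rewrite plus_INR, mult_INR; simpl; ring).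
    apply le_INR. nia. }
  assert (Sp : 0 < INR (S n)) by (apply lt_0_INR; lia).
  assert (INR Q <= INR m / INR (S n) + 2).
  { apply (Rmult_le_reg_r (INR (S n))); auto. unfold Rdiv. rewrite Rmult_plus_distr_r, Rmult_assoc, Rinv_l by lra. lra. }
  pose proof (pos_INR K').
  assert (INR K' * INR Q <= INR K' * (INR m / INR (S n) + 2)) by (apply Rmult_le_compat_l; lra).
  unfold Rdiv in *. lra.
Qed.


Lemma Int_mid n a m : (P n <= a)%nat -> (a + m <= P n + cc C n + S n * (P n * P n))%nat ->
  Int a m <= INR K' * INR m / INR (S n) + 3 * INR K'.
Proof.
  intros H1 H2. set (s := (P n + cc C n)%nat) in *.
  assert (Sp : 0 < INR (S n)) by (apply lt_0_INR; lia).
  pose proof (pos_INR K'). pose proof (pos_INR m).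
  assert (0 <= INR K' * INR m / INR (S n)) by (unfold Rdiv; apply Rmult_le_pos; [nra|left; apply Rinv_0_lt_compat; lra]).
  destruct (le_lt_dec (a + m) s) as [h|h].
  - rewrite Int_zero. lra. intros i Hi. replace (a + i)%nat with (P n + (a - P n + i))%nat by lia.
    apply NC. unfold s in h. lia.
  - destruct (le_lt_dec s a) as [h2|h2].
    + pose proof (Int_run n a m h2 H2). lra.
    + replace m with ((s - a) + (a + m - s))%nat by lia.
      eapply Rle_trans; [apply Int_split|].
      rewrite Int_zero. 2:{ intros i Hi. replace (a + i)%nat with (P n + (a - P n + i))%nat by lia.
        apply NC. unfold s in Hi. lia. }
      replace (a + (s - a))%nat with s by lia.
      pose proof (Int_run n s (a + m - s) (Nat.le_refl _) ltac:(lia)).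
      assert (INR (a + m - s) <= INR (s - a + (a + m - s))) by (apply le_INR; lia).
      assert (INR K' * INR (a + m - s) / INR (S n) <= INR K' * INR (s - a + (a + m - s)) / INR (S n)).
      { unfold Rdiv. apply Rmult_le_compat_r. left; apply Rinv_0_lt_compat; lra. apply Rmult_le_compat_l; lra. }
      lra.
Qed.

Lemma Int_copyA n a m : (a + m <= P n)%nat ->
  Int (P n + (cc C n + S n * (P n * P n)) + a) m = Int a m.
Proof.
  intros H. apply Int_local. intros i Hi. rewrite <- Nat.add_assoc. apply tt_A; auto. lia.
Qed.

Definition Inv (e b1 b2 : R) n :=
  (forall m, (m <= P n)%nat -> Int 0 m <= e * INR m + b1) /\
  (forall a m, (a + m = P n)%nat -> Int a m <= e * INR m + b1) /\
  (forall a m, (a + m <= P n)%nat -> Int a m <= e * INR m + b2).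

Lemma Inv_step e b1 b2 n : 0 < e ->
  Int 0 (P n) <= e * INR (P n) ->
  INR K' / INR (S n) <= e / 2 ->
  5 * INR K' <= e / 2 * INR (cc C n + S n * (P n * P n)) ->
  4 * INR K' <= b1 -> 2 * b1 + 5 * INR K' <= b2 ->
  Inv e b1 b2 n -> Inv e b1 b2 (S n).
Proof.
  intros He Th Hp Sl Hb1 Hb2 [IPre [ISuf IGen]].
  set (Pn := P n) in *. set (Md := (cc C n + S n * (P n * P n))%nat) in *.
  assert (HPS : P (S n) = (Pn + Md + Pn)%nat) by (rewrite PP_S; unfold Pn, Md; lia).
  pose proof (pos_INR K') as K0.
  assert (Sp : 0 < INR (S n)) by (apply lt_0_INR; lia).
  assert (Mid : forall a m, (Pn <= a)%nat -> (a + m <= Pn + Md)%nat -> Int a m <= e / 2 * INR m + 3 * INR K').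
  { intros a m H1 H2. pose proof (Int_mid n a m H1 ltac:(unfold Md, Pn in *; lia)).
    assert (INR K' * INR m / INR (S n) <= e / 2 * INR m).
    { replace (INR K' * INR m / INR (S n)) with (INR K' / INR (S n) * INR m) by (field; lra).
      apply Rmult_le_compat_r; [apply pos_INR|lra]. }
    lra. }
  assert (Cp : forall a m, (a + m <= Pn)%nat -> Int (Pn + Md + a) m = Int a m).
  { intros a m H. unfold Pn, Md. apply Int_copyA. auto. }
  assert (SlR : 5 * INR K' <= e / 2 * INR Md) by exact Sl.
  pose proof (pos_INR Md). pose proof (pos_INR Pn).
  assert (EP : forall x, 0 <= e * INR x) by (intros; apply Rmult_le_pos; [lra|apply pos_INR]).
  pose proof (EP Md). pose proof (EP Pn).
  split; [|split].
  -
    intros m Hm. rewrite HPS in Hm.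
    destruct (le_lt_dec m Pn) as [c1|c1]; [apply IPre; auto|].
    destruct (le_lt_dec m (Pn + Md)) as [c2|c2].
    + replace m with (Pn + (m - Pn))%nat by lia. eapply Rle_trans; [apply Int_split|].
      pose proof (Mid (0 + Pn)%nat (m - Pn)%nat ltac:(lia) ltac:(lia)).
      pose proof (EP (m - Pn)%nat). rewrite plus_INR. lra.
    + replace m with (Pn + (Md + (m - Pn - Md)))%nat by lia. eapply Rle_trans; [apply Int_split|].
      pose proof (Int_split (0 + Pn) Md (m - Pn - Md)) as S1.
      pose proof (Mid (0 + Pn)%nat Md ltac:(lia) ltac:(lia)).
      replace (0 + Pn + Md)%nat with (Pn + Md + 0)%nat in S1 by lia.
      rewrite Cp in S1 by lia. pose proof (IPre (m - Pn - Md)%nat ltac:(lia)).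
      rewrite !plus_INR. lra.
  -
    intros a m Ham. rewrite HPS in Ham.
    destruct (le_lt_dec (Pn + Md) a) as [c1|c1].
    + replace a with (Pn + Md + (a - Pn - Md))%nat by lia. rewrite Cp by lia. apply ISuf. lia.
    + destruct (le_lt_dec Pn a) as [c2|c2].
      * replace m with ((Pn + Md - a) + Pn)%nat by lia. eapply Rle_trans; [apply Int_split|].
        pose proof (Mid a (Pn + Md - a)%nat c2 ltac:(lia)).
        replace (a + (Pn + Md - a))%nat with (Pn + Md + 0)%nat by lia. rewrite Cp by lia.
        pose proof (EP (Pn + Md - a)%nat). rewrite plus_INR. lra.
      * replace m with ((Pn - a) + (Md + Pn))%nat by lia. eapply Rle_trans; [apply Int_split|].
        pose proof (Int_split (a + (Pn - a)) Md Pn) as S1.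
        replace (a + (Pn - a))%nat with Pn in * by lia.
        pose proof (Mid Pn Md (Nat.le_refl _) (Nat.le_refl _)).
        replace (Pn + Md)%nat with (Pn + Md + 0)%nat in S1 by lia. rewrite Cp in S1 by lia.
        pose proof (ISuf a (Pn - a)%nat ltac:(lia)).
        rewrite !plus_INR. lra.
  -
    intros a m Ham. rewrite HPS in Ham.
    destruct (le_lt_dec (a + m) Pn) as [c1|c1]; [apply IGen; auto|].
    destruct (le_lt_dec (Pn + Md) a) as [c2|c2].
    { replace a with (Pn + Md + (a - Pn - Md))%nat by lia. rewrite Cp by lia. apply IGen. lia. }
    destruct (le_lt_dec Pn a) as [c3|c3]; destruct (le_lt_dec (a + m) (Pn + Md)) as [c4|c4].
    + pose proof (Mid a m c3 c4). pose proof (EP m). lra.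
    + replace m with ((Pn + Md - a) + (a + m - Pn - Md))%nat by lia. eapply Rle_trans; [apply Int_split|].
      pose proof (Mid a (Pn + Md - a)%nat c3 ltac:(lia)).
      replace (a + (Pn + Md - a))%nat with (Pn + Md + 0)%nat by lia. rewrite Cp by lia.
      pose proof (IPre (a + m - Pn - Md)%nat ltac:(lia)).
      pose proof (EP (Pn + Md - a)%nat). rewrite plus_INR. lra.
    + replace m with ((Pn - a) + (a + m - Pn))%nat by lia. eapply Rle_trans; [apply Int_split|].
      replace (a + (Pn - a))%nat with Pn by lia.
      pose proof (Mid Pn (a + m - Pn)%nat (Nat.le_refl _) ltac:(lia)).
      pose proof (ISuf a (Pn - a)%nat ltac:(lia)).
      pose proof (EP (a + m - Pn)%nat). rewrite plus_INR. lra.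
    + replace m with ((Pn - a) + (Md + (a + m - Pn - Md)))%nat by lia. eapply Rle_trans; [apply Int_split|].
      replace (a + (Pn - a))%nat with Pn by lia.
      pose proof (Int_split Pn Md (a + m - Pn - Md)) as S1.
      pose proof (Mid Pn Md (Nat.le_refl _) (Nat.le_refl _)).
      replace (Pn + Md)%nat with (Pn + Md + 0)%nat in S1 by lia. rewrite Cp in S1 by lia.
      pose proof (ISuf a (Pn - a)%nat ltac:(lia)).
      pose proof (IPre (a + m - Pn - Md)%nat ltac:(lia)).
      rewrite !plus_INR. lra.
Qed.


Hypothesis Hc : forall e, 0 < e -> exists N, forall n, (N <= n)%nat -> INR (cc C n) <= e * INR (PP C A1 y n).

Theorem win_bound : forall e, 0 < e -> exists b, forall a m, cnt O a m <= e * INR m + b.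
Proof.
  intros e He.
  assert (G0 : forall m, P4.G y z K m <= e / 3 * INR m + 0).
  { intros m. unfold P4.G. rewrite cnt_zero by (intros; apply NY). pose proof (pos_INR m).
    assert (0 <= e / 3 * INR m) by (apply Rmult_le_pos; lra). lra. }
  destruct (lemmaB C A1 y z K A1_ne Hc (e/3) 0 ltac:(lra) (Rle_refl 0) G0) as [n1 Hn1].
  destruct (nat_above (10 * INR K' / e)) as [N2 HN2].
  set (n0 := S (n1 + N2)).
  set (b1 := INR (P n0) + 4 * INR K'). set (b2 := 2 * b1 + 5 * INR K').
  pose proof (pos_INR K') as K0.
  assert (0 <= 10 * INR K' / e) by (apply Rmult_le_pos; [lra|left; apply Rinv_0_lt_compat; lra]).
  assert (Hinv : forall d, Inv e b1 b2 (n0 + d)).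
  { induction d as [|d IH].
    - rewrite Nat.add_0_r. assert (EP : forall x, 0 <= e * INR x) by (intros; apply Rmult_le_pos; [lra|apply pos_INR]).
      split; [|split].
      + intros m Hm. pose proof (Int_bounds 0 m). assert (INR m <= INR (P n0)) by (apply le_INR; auto).
        pose proof (EP m). unfold b1. lra.
      + intros a m Hm. pose proof (Int_bounds a m). assert (INR m <= INR (P n0)) by (apply le_INR; lia).
        pose proof (EP m). unfold b1. lra.
      + intros a m Hm. pose proof (Int_bounds a m). assert (INR m <= INR (P n0)) by (apply le_INR; lia).
        pose proof (EP m). pose proof (pos_INR (P n0)). unfold b2, b1. lra.
    - replace (n0 + S d)%nat with (S (n0 + d)) by lia. apply Inv_step; auto.
      + set (n := (n0 + d)%nat). replace n with (S (n1 + N2 + d)) by (unfold n, n0; lia).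
        eapply Rle_trans. { unfold Int. apply (cnt_len_mono _ _ _ (P (S (n1 + N2 + d)))). lia. }
        specialize (Hn1 (n1 + N2 + d)%nat ltac:(lia)). unfold P4.F in Hn1. lra.
      + assert (INR N2 <= INR (S (n0 + d))) by (apply le_INR; unfold n0; lia).
        assert (Sp : 0 < INR (S (n0 + d))) by (apply lt_0_INR; lia).
        assert (10 * INR K' <= e * INR (S (n0 + d))).
        { assert (X1 : 10 * INR K' / e <= INR (S (n0 + d))) by lra.
          apply Rmult_le_compat_l with (r := e) in X1; [|lra].
          replace (e * (10 * INR K' / e)) with (10 * INR K') in X1 by (field; lra). lra. }
        apply (Rmult_le_reg_r (INR (S (n0 + d)))); auto.
        unfold Rdiv. rewrite Rmult_assoc, Rinv_l by lra. lra.
      + assert (INR N2 <= INR (S (n0 + d))) by (apply le_INR; unfold n0; lia).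
        assert (10 * INR K' <= e * INR (S (n0 + d))).
        { assert (X1 : 10 * INR K' / e <= INR (S (n0 + d))) by lra.
          apply Rmult_le_compat_l with (r := e) in X1; [|lra].
          replace (e * (10 * INR K' / e)) with (10 * INR K') in X1 by (field; lra). lra. }
        assert (INR (S (n0 + d)) <= INR (cc C (n0 + d) + S (n0 + d) * (P (n0 + d) * P (n0 + d)))).
        { apply le_INR. pose proof (PP_pos C A1 y A1_ne (n0 + d)). nia. }
        assert (e * INR (S (n0 + d)) <= e * INR (cc C (n0 + d) + S (n0 + d) * (P (n0 + d) * P (n0 + d))))
          by (apply Rmult_le_compat_l; lra).
        lra.
      + unfold b1. pose proof (pos_INR (P n0)). lra.
      + unfold b2. lra. }
  exists (e * INR K' + b2). intros a m.
  destruct (Hinv (a + m + K')%nat) as [_ [_ IG]].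
  pose proof (PP_gt C A1 y A1_ne (n0 + (a + m + K'))).
  specialize (IG a (m + K')%nat ltac:(lia)).
  unfold Int in IG. replace (m + K' - K')%nat with m in IG by lia.
  rewrite plus_INR in IG. lra.
Qed.

End Win.

End P6.
Import P6.

Module P7.
Open Scope nat_scope.

Definition nb (a : nat) : nat := if Nat.eqb a 0 then 1 else 0.
Lemma nb_neq a : nb a <> a.
Proof. unfold nb. destruct (Nat.eqb_spec a 0); lia. Qed.
Lemma nb_lt a : nb a < 2.
Proof. unfold nb. destruct (Nat.eqb a 0); lia. Qed.

Section Per.
Variable z : seqn.
Variable M : nat.
Hypothesis M1 : 1 <= M.

Definition pa := z (M - 1).
Definition pb := z 0.
Definition Qp := if Nat.eqb pa pb then S M else S (S M).
Definition per (i : nat) : nat :=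
  let r := i mod Qp in if r <? M then z r else if r =? M then nb pa else pa.

Lemma Qp_bounds : S M <= Qp <= S (S M).
Proof. unfold Qp. destruct (Nat.eqb pa pb); lia. Qed.

Lemma per_low i : i mod Qp < M -> per i = z (i mod Qp).
Proof. intros H. unfold per. destruct (Nat.ltb_spec (i mod Qp) M); [auto|lia]. Qed.

Lemma per_agree q i : i < M -> per (q * Qp + i) = z i.
Proof.
  intros H. pose proof Qp_bounds.
  assert (E : (q * Qp + i) mod Qp = i) by (symmetry; apply (Nat.mod_unique _ _ q); lia).
  rewrite per_low; rewrite E; auto.
Qed.

Lemma mod_succ i : let r := i mod Qp in
  (r + 1 < Qp -> (i + 1) mod Qp = r + 1) /\ (r + 1 = Qp -> (i + 1) mod Qp = 0).
Proof.
  pose proof Qp_bounds. simpl.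
  pose proof (Nat.div_mod_eq i Qp). pose proof (Nat.mod_upper_bound i Qp ltac:(lia)).
  split; intros h.
  - symmetry. apply (Nat.mod_unique _ _ (i / Qp)); lia.
  - symmetry. apply (Nat.mod_unique _ _ (S (i / Qp))); lia.
Qed.

Lemma per_adj i : per i = per (i + 1) -> i mod Qp + 1 < M /\ (i + 1) mod Qp = i mod Qp + 1.
Proof.
  intros H. pose proof Qp_bounds as QB. destruct (mod_succ i) as [S1 S2].
  pose proof (Nat.mod_upper_bound i Qp ltac:(lia)) as U.
  set (r := i mod Qp) in *.
  destruct (le_lt_dec M (r + 1)) as [h|h]; [|split; auto; apply S1; lia].
  exfalso. unfold per in H. fold r in H.
  pose proof (nb_neq pa) as NB.
  destruct (Nat.ltb_spec r M) as [h1|h1].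
  -
    assert (r = M - 1) by lia. rewrite S1 in H by lia.
    destruct (Nat.ltb_spec (r + 1) M); [lia|]. destruct (Nat.eqb_spec (r+1) M); [|lia].
    unfold pa in H, NB. subst r. replace (M - 1) with (M - 1) in H by lia. congruence.
  - destruct (Nat.eqb_spec r M) as [h2|h2].
    + unfold Qp in *. destruct (Nat.eqb_spec pa pb) as [e|e].
      * rewrite S2 in H by lia. simpl in H. destruct (Nat.ltb_spec 0 M); [|lia].
        unfold pb in e. congruence.
      * rewrite S1 in H by lia. destruct (Nat.ltb_spec (r + 1) M); [lia|].
        destruct (Nat.eqb_spec (r + 1) M); [lia|]. congruence.
    + unfold Qp in *. destruct (Nat.eqb_spec pa pb) as [e|e]; [lia|].
      rewrite S2 in H by lia. destruct (Nat.ltb_spec 0 M); [|lia]. unfold pb in e. congruence.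
Qed.

Lemma per_PiL k L : PiL k L z -> 2 <= k -> 2 <= L -> PiL k L per.
Proof.
  intros [Hs Hz] Hk HL. split.
  - intros i. unfold per. pose proof (nb_lt pa). 
    destruct (_ <? _); [apply Hs|]. destruct (_ =? _); [lia|apply Hs].
  - intros i Hrun.
    assert (Hj : forall j, j < L -> (i + j) mod Qp = i mod Qp + j /\ i mod Qp + j < M).
    { intros j; induction j as [|j IH]; intros Hj.
      { rewrite Nat.add_0_r. pose proof (per_adj i) as PA. assert (E1 : per i = per (i + 1)) by (symmetry; apply (Hrun 1); lia).
        specialize (PA E1). split; lia. }
      { destruct (IH ltac:(lia)) as [I1 I2].
        assert (per (i + j) = per (i + j + 1)) by (rewrite Hrun by lia; rewrite <- Nat.add_assoc; rewrite Hrun; lia).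
        destruct (per_adj (i + j) H) as [A1 A2].
        replace (i + S j) with (i + j + 1) by lia. lia. } }
    apply (Hz (i mod Qp)). intros j Hjl.
    destruct (Hj j Hjl) as [E1 E2]. destruct (Hj 0 ltac:(lia)) as [E3 E4].
    rewrite Nat.add_0_r in E3.
    rewrite <- E1. rewrite <- (per_low (i + j)) by lia. rewrite <- (per_low i) by lia.
    apply Hrun; auto.
Qed.

End Per.

(* two periodic points with disjoint 4-windows *)
Definition x1 (i : nat) : nat := i mod 2.
Definition x2 (i : nat) : nat := if Nat.eqb (i mod 3) 2 then 1 else 0.

Lemma x1_PiL k L : 2 <= k -> 2 <= L -> PiL k L x1.
Proof.
  intros Hk HL. split.
  - intros i. unfold x1. pose proof (Nat.mod_upper_bound i 2). lia.
  - intros i H. specialize (H 1 ltac:(lia)). unfold x1 in H.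
    pose proof (Nat.div_mod_eq i 2). pose proof (Nat.mod_upper_bound i 2 ltac:(lia)).
    pose proof (Nat.div_mod_eq (i+1) 2). pose proof (Nat.mod_upper_bound (i+1) 2 ltac:(lia)). lia.
Qed.

Lemma x2_PiL k L : 2 <= k -> 3 <= L -> PiL k L x2.
Proof.
  intros Hk HL. split.
  - intros i. unfold x2. destruct (_ =? _); lia.
  - intros i H. pose proof (H 1 ltac:(lia)). pose proof (H 2 ltac:(lia)). unfold x2 in *.
    pose proof (Nat.div_mod_eq i 3). pose proof (Nat.mod_upper_bound i 3 ltac:(lia)).
    pose proof (Nat.div_mod_eq (i+1) 3). pose proof (Nat.mod_upper_bound (i+1) 3 ltac:(lia)).
    pose proof (Nat.div_mod_eq (i+2) 3). pose proof (Nat.mod_upper_bound (i+2) 3 ltac:(lia)).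
    destruct (Nat.eqb_spec (i mod 3) 2); destruct (Nat.eqb_spec ((i+1) mod 3) 2);
    destruct (Nat.eqb_spec ((i+2) mod 3) 2); lia.
Qed.

Lemma x12_disjoint (z : seqn) :
  (forall i, ~ (forall j, j < 4 -> x1 (i + j) = z j)) \/
  (forall i, ~ (forall j, j < 4 -> x2 (i + j) = z j)).
Proof.
  destruct (classic (exists i, forall j, j < 4 -> x1 (i + j) = z j)) as [[i Hi]|Hn].
  - right. intros i' Hi'.
    pose proof (Hi 0 ltac:(lia)). pose proof (Hi 1 ltac:(lia)). pose proof (Hi 2 ltac:(lia)). pose proof (Hi 3 ltac:(lia)).
    pose proof (Hi' 0 ltac:(lia)). pose proof (Hi' 1 ltac:(lia)). pose proof (Hi' 2 ltac:(lia)). pose proof (Hi' 3 ltac:(lia)).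
    unfold x1, x2 in *.
    pose proof (Nat.div_mod_eq (i+0) 2). pose proof (Nat.mod_upper_bound (i+0) 2 ltac:(lia)).
    pose proof (Nat.div_mod_eq (i+1) 2). pose proof (Nat.mod_upper_bound (i+1) 2 ltac:(lia)).
    pose proof (Nat.div_mod_eq (i+2) 2). pose proof (Nat.mod_upper_bound (i+2) 2 ltac:(lia)).
    pose proof (Nat.div_mod_eq (i+3) 2). pose proof (Nat.mod_upper_bound (i+3) 2 ltac:(lia)).
    pose proof (Nat.div_mod_eq (i'+0) 3). pose proof (Nat.mod_upper_bound (i'+0) 3 ltac:(lia)).
    pose proof (Nat.div_mod_eq (i'+1) 3). pose proof (Nat.mod_upper_bound (i'+1) 3 ltac:(lia)).
    pose proof (Nat.div_mod_eq (i'+2) 3). pose proof (Nat.mod_upper_bound (i'+2) 3 ltac:(lia)).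
    pose proof (Nat.div_mod_eq (i'+3) 3). pose proof (Nat.mod_upper_bound (i'+3) 3 ltac:(lia)).
    destruct (Nat.eqb_spec ((i'+0) mod 3) 2); destruct (Nat.eqb_spec ((i'+1) mod 3) 2);
    destruct (Nat.eqb_spec ((i'+2) mod 3) 2); destruct (Nat.eqb_spec ((i'+3) mod 3) 2); lia.
  - left. intros i Hi. apply Hn. exists i. auto.
Qed.

End P7.
Import P7.

Module P8.
Open Scope R_scope.

Lemma visits_of_agree x z eps M p : (forall i, (i < S M)%nat -> x (p + i)%nat = z i) -> (1 <= p)%nat ->
  / 2 ^ M <= eps -> visits x (Defs.ball z eps) p.
Proof.
  intros H Hp He. split; auto. unfold Defs.ball.
  assert (Defs.dist (shiftn p x) z <= / 2 ^ S M).
  { apply dist_prefix_le. intros i Hi. unfold shiftn. rewrite Nat.add_comm. apply H; auto. }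
  pose proof (pow2_inv_lt M). lra.
Qed.

Lemma agree_of_visits x z eps M p : visits x (Defs.ball z eps) p -> eps <= / 2 ^ M ->
  forall i, (i < M)%nat -> x (p + i)%nat = z i.
Proof.
  intros [_ H] He i Hi. unfold Defs.ball in H.
  pose proof (dist_lt_prefix (shiftn p x) z M ltac:(lra) i Hi). unfold shiftn in H0.
  rewrite Nat.add_comm. auto.
Qed.

Definition Cont (k L : nat) (x : seqn) : Prop :=
  forall w, PiL k L w -> forall M, exists pos, (1 <= pos)%nat /\ forall i, (i < M)%nat -> x (pos + i)%nat = w i.

Lemma cnt_periodic (A : nat -> Prop) a Q q : (1 <= Q)%nat ->
  (forall q', (q' < q)%nat -> A (a + q' * Q)%nat) -> INR q <= cnt A a (q * Q).
Proof.
  intros HQ. induction q as [|q IH]; intros H.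
  - simpl. lra.
  - replace (S q * Q)%nat with (q * Q + Q)%nat by lia. rewrite cnt_add. rewrite S_INR.
    assert (INR q <= cnt A a (q * Q)) by (apply IH; intros; apply H; lia).
    assert (1 <= cnt A (a + q * Q) Q).
    { apply Rle_trans with (cnt A (a + q * Q) 1). simpl. rewrite indic_true. lra.
      rewrite Nat.add_0_r. apply H. lia. apply cnt_len_mono. lia. }
    lra.
Qed.

Lemma BU_pos k L x z : Cont k L x -> PiL k L z -> (2 <= k)%nat -> (3 <= L)%nat ->
  forall eps, 0 < eps -> Rbar_lt 0 (density BanachUpper (visits x (Defs.ball z eps))).
Proof.
  intros Hx Hz Hk HL eps He. destruct (small_pow eps He) as [M0 HM0].
  set (M := S M0). assert (M1 : (1 <= M)%nat) by (unfold M; lia).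
  pose proof (per_PiL z M M1 k L Hz Hk ltac:(lia)) as HP.
  pose proof (Qp_bounds z M) as QB. set (Q := Qp z M) in *.
  assert (Q0 : 0 < INR Q) by (apply lt_0_INR; lia).
  unfold density. apply (Lim_pos_of_ev _ (/ (2 * INR Q))). { apply Rinv_0_lt_compat; lra. }
  exists (2 * Q)%nat. intros n Hn.
  destruct (Hx _ HP (S n + M)%nat) as [pos [Hpos Hag]].
  set (q0 := (S n / Q)%nat).
  pose proof (Nat.div_mod_eq (S n) Q). pose proof (Nat.mod_upper_bound (S n) Q ltac:(lia)).
  assert (Hc : INR q0 <= cnt (visits x (Defs.ball z eps)) pos (S n)).
  { apply Rle_trans with (cnt (visits x (Defs.ball z eps)) pos (q0 * Q)).
    - apply cnt_periodic; [lia|]. intros q' Hq'. apply (visits_of_agree _ _ _ M0); [|lia|lra].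
      intros i Hi. rewrite <- Nat.add_assoc. rewrite Hag by nia. unfold M in *.
      replace (q' * Q)%nat with (q' * Qp z (S M0))%nat by reflexivity. apply per_agree; lia.
    - apply cnt_len_mono. unfold q0. nia. }
  apply (real_Sup_ge _ 1 (pos - 1)%nat).
  - intros m. pose proof (cnt_bounds (visits x (Defs.ball z eps)) (S m) (S n)).
    assert (0 < INR (S n)) by (apply lt_0_INR; lia). split.
    + apply Rmult_le_pos; [lra|left; apply Rinv_0_lt_compat; lra].
    + apply (Rmult_le_reg_r (INR (S n))); auto. unfold Rdiv. rewrite Rmult_assoc, Rinv_l by lra. lra.
  - replace (S (pos - 1)) with pos by lia.
    assert (0 < INR (S n)) by (apply lt_0_INR; lia).
    assert (Hq : INR (S n) <= INR q0 * INR Q + INR Q).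
    { rewrite <- mult_INR, <- plus_INR. apply le_INR. unfold q0. lia. }
    assert (Hn2 : 2 * INR Q <= INR (S n)) by (rewrite <- (mult_INR 2); apply le_INR; lia).
    apply (Rmult_le_reg_r (INR (S n))); auto. unfold Rdiv. rewrite Rmult_assoc, Rinv_l by lra.
    apply (Rmult_le_reg_r (2 * INR Q)); [lra|].
    replace (/ (2 * INR Q) * INR (S n) * (2 * INR Q)) with (INR (S n)) by (field; lra).
    nra.
Qed.

Lemma BL_zero k L x z : Cont k L x -> (2 <= k)%nat -> (3 <= L)%nat ->
  exists eps, 0 < eps /\ ~ Rbar_lt 0 (density BanachLower (visits x (Defs.ball z eps))).
Proof.
  intros Hx Hk HL. exists (/ 2 ^ 4). split. { apply Rinv_0_lt_compat, pow_lt; lra. }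
  assert (W : exists xw, PiL k L xw /\ forall i, ~ (forall j, (j < 4)%nat -> xw (i + j)%nat = z j)).
  { destruct (x12_disjoint z) as [h|h]; [exists x1|exists x2]; split; auto.
    apply x1_PiL; lia. apply x2_PiL; lia. }
  destruct W as [xw [Hxw Hdis]].
  unfold density. apply Lim_notpos. intros e He. exists 0%nat. intros n _.
  destruct (Hx xw Hxw (S n + 4)%nat) as [pos [Hpos Hag]].
  eapply Rle_trans.
  - apply (real_Inf_le _ (pos - 1)%nat). intros m. apply Rmult_le_pos. apply cnt_bounds.
    left; apply Rinv_0_lt_compat, lt_0_INR; lia.
  - replace (S (pos - 1)) with pos by lia. rewrite cnt_zero. unfold Rdiv; rewrite Rmult_0_l; lra.
    intros i Hi Hv. apply (Hdis i). intros j Hj.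
    rewrite <- (agree_of_visits x z _ 4 (pos + i) Hv (Rle_refl _) j Hj).
    rewrite <- Nat.add_assoc. symmetry. apply Hag. lia.
Qed.

Lemma BU_zero_of_count x z K : (forall e, 0 < e -> exists b, forall a m, cnt (fun p => forall i, (i < K)%nat -> x (p + i)%nat = z i) a m <= e * INR m + b) ->
  ~ Rbar_lt 0 (density BanachUpper (visits x (Defs.ball z (/ 2 ^ K)))).
Proof.
  intros H. unfold density. apply Lim_notpos. intros e He.
  destruct (H (e/2) ltac:(lra)) as [b Hb].
  assert (b0 : 0 <= b) by (pose proof (Hb 0%nat 0%nat); simpl in *; lra).
  destruct (nat_above (2 * b / e)) as [N HN].
  exists N. intros n Hn. apply real_Sup_le. intros m.
  assert (Sp : 0 < INR (S n)) by (apply lt_0_INR; lia).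
  pose proof (cnt_bounds (visits x (Defs.ball z (/ 2 ^ K))) (S m) (S n)).
  assert (Hc : cnt (visits x (Defs.ball z (/ 2 ^ K))) (S m) (S n) <= e / 2 * INR (S n) + b).
  { eapply Rle_trans; [|apply Hb]. apply cnt_mono. intros i Hi Hv.
    intros j Hj. apply (agree_of_visits x z _ K _ Hv (Rle_refl _) j Hj). }
  assert (b <= e / 2 * INR (S n)).
  { assert (2 * b / e <= INR (S n)) by (assert (INR N <= INR (S n)) by (apply le_INR; lia); lra).
    apply Rmult_le_compat_l with (r := e/2) in H1; [|lra].
    replace (e / 2 * (2 * b / e)) with b in H1 by (field; lra). lra. }
  split.
  - apply Rmult_le_pos; [lra|left; apply Rinv_0_lt_compat; lra].
  - apply (Rmult_le_reg_r (INR (S n))); auto. unfold Rdiv. rewrite Rmult_assoc, Rinv_l by lra. lra.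
Qed.

End P8.
Import P8.

Module P9.
Open Scope R_scope.

Definition rho (x z : seqn) (M : nat) (n : nat) : R := cnt (Occ z M x) 1 (S n) / INR (S n).

Lemma ratio_mono (A B : nat -> Prop) : (forall p, (1 <= p)%nat -> A p -> B p) ->
  forall n, cnt A 1 (S n) / INR (S n) <= cnt B 1 (S n) / INR (S n).
Proof.
  intros H n. unfold Rdiv. apply Rmult_le_compat_r.
  left; apply Rinv_0_lt_compat, lt_0_INR; lia.
  apply cnt_mono. intros i Hi HA. apply H; auto; lia.
Qed.

Lemma red_U x z : (forall eps, 0 < eps -> Rbar_lt 0 (density UpperD (visits x (Defs.ball z eps)))) <->
  (forall M, Rbar_lt 0 (LimSup_seq (rho x z M))).
Proof.
  split; intros H.
  - intros M. assert (He : 0 < / 2 ^ M) by (apply Rinv_0_lt_compat, pow_lt; lra).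
    specialize (H _ He). unfold density in H. eapply Rbar_lt_le_trans; [exact H|].
    apply LimSup_le. exists 0%nat. intros n _. unfold rho. apply ratio_mono.
    intros p Hp Hv i Hi. apply (agree_of_visits x z _ M p Hv (Rle_refl _) i Hi).
  - intros eps He. destruct (small_pow eps He) as [M HM].
    specialize (H (S M)). eapply Rbar_lt_le_trans; [exact H|]. unfold density.
    apply LimSup_le. exists 0%nat. intros n _. unfold rho. apply ratio_mono.
    intros p Hp HO. apply (visits_of_agree x z eps M p); auto. lra.
Qed.

Lemma red_L x z : (forall eps, 0 < eps -> Rbar_lt 0 (density LowerD (visits x (Defs.ball z eps)))) <->
  (forall M, Rbar_lt 0 (LimInf_seq (rho x z M))).
Proof.
  split; intros H.
  - intros M. assert (He : 0 < / 2 ^ M) by (apply Rinv_0_lt_compat, pow_lt; lra).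
    specialize (H _ He). unfold density in H. eapply Rbar_lt_le_trans; [exact H|].
    apply LimInf_le. exists 0%nat. intros n _. unfold rho. apply ratio_mono.
    intros p Hp Hv i Hi. apply (agree_of_visits x z _ M p Hv (Rle_refl _) i Hi).
  - intros eps He. destruct (small_pow eps He) as [M HM].
    specialize (H (S M)). eapply Rbar_lt_le_trans; [exact H|]. unfold density.
    apply LimInf_le. exists 0%nat. intros n _. unfold rho. apply ratio_mono.
    intros p Hp HO. apply (visits_of_agree x z eps M p); auto. lra.
Qed.

Lemma rho_bounds x z M n :
  cnt (Occ z M x) 0 (S (S n)) - 1 <= INR (S n) * rho x z M n <= cnt (Occ z M x) 0 (S (S n)).
Proof.
  unfold rho. replace (INR (S n) * (cnt (Occ z M x) 1 (S n) / INR (S n))) with (cnt (Occ z M x) 1 (S n))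
    by (field; apply not_0_INR; lia).
  replace (S (S n)) with (1 + S n)%nat by lia. rewrite cnt_add.
  replace (0 + 1)%nat with 1%nat by reflexivity.
  pose proof (cnt_bounds (Occ z M x) 0 1) as B. change (INR 1) with 1 in B. lra.
Qed.

Lemma LS_not_pos (u : nat -> R) : ~ Rbar_lt 0 (LimSup_seq u) ->
  forall d, 0 < d -> exists N, forall n, (N <= n)%nat -> u n < d.
Proof.
  intros H d Hd. apply NNPP. intros Hn. apply H. apply LS_pos_iff. exists d. split; auto.
  intros N. apply NNPP. intros Hm. apply Hn. exists N. intros n Hn'.
  apply Rnot_le_lt. intros Hl. apply Hm. exists n; auto.
Qed.

Lemma LI_not_pos (u : nat -> R) : ~ Rbar_lt 0 (LimInf_seq u) ->
  forall d, 0 < d -> forall N, exists n, (N <= n)%nat /\ u n < d.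
Proof.
  intros H d Hd N. apply NNPP. intros Hn. apply H. apply LI_pos_iff. exists d. split; auto.
  exists N. intros n Hn'. apply Rnot_lt_le. intros Hl. apply Hn. exists n; auto.
Qed.

Lemma INR_plus2 N : INR (N + 2) = INR N + 2.
Proof. rewrite plus_INR. simpl. ring. Qed.

Section Equiv.
Variable C : nat -> list nat.
Variable A1 : list nat.
Variable y : seqn.
Variable z : seqn.
Variable M : nat.
Hypothesis A1_ne : A1 <> nil.
Hypothesis Hc : forall e, 0 < e -> exists N, forall n, (N <= n)%nat -> INR (cc C n) <= e * INR (PP C A1 y n).

Notation t := (tt C A1 y).
Notation F := (P4.F C A1 y z M).
Notation G := (P4.G y z M).

Lemma U_equiv : Rbar_lt 0 (LimSup_seq (rho t z M)) <-> Rbar_lt 0 (LimSup_seq (rho y z M)).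
Proof.
  split.
  - intros Ht. apply NNPP. intros Hy.
    assert (HG : forall e, 0 < e -> exists b, forall m, G m <= e * INR m + b).
    { intros e He. destruct (LS_not_pos _ Hy e He) as [N HN]. exists (INR N + 3).
      intros m. destruct (le_lt_dec (N + 2) m) as [h|h].
      - destruct m as [|[|m]]; [lia|lia|]. pose proof (rho_bounds y z M m). specialize (HN m ltac:(lia)).
        unfold P4.G. assert (INR (S m) * rho y z M m <= INR (S m) * e) by (apply Rmult_le_compat_l; [apply pos_INR|lra]).
        rewrite !S_INR in *. pose proof (pos_INR N). pose proof (pos_INR m). nra.
      - pose proof (cnt_bounds (Occ z M y) 0 m). unfold P4.G.
        assert (INR m <= INR N + 2) by (rewrite <- INR_plus2; apply le_INR; lia).
        assert (0 <= e * INR m) by (apply Rmult_le_pos; [lra|apply pos_INR]). lra. }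
    apply LS_pos_iff in Ht. destruct Ht as [d [Hd Hio]].
    destruct (UH C A1 y z M A1_ne Hc HG (d/4) ltac:(lra)) as [N0 HN0].
    destruct (Hio N0) as [n [Hn1 Hn2]].
    pose proof (rho_bounds t z M n). specialize (HN0 (S (S n)) ltac:(lia)).
    unfold P4.F in HN0.
    assert (INR (S n) * d <= INR (S n) * rho t z M n) by (apply Rmult_le_compat_l; [apply pos_INR|lra]).
    rewrite !S_INR in *. pose proof (pos_INR n). nra.
  - intros Hy. apply LS_pos_iff in Hy. destruct Hy as [d [Hd Hio]].
    assert (HG : forall N, exists m, (N <= m)%nat /\ d / 2 * INR m <= G m).
    { intros N. destruct (Hio N) as [n [Hn1 Hn2]]. exists (S (S n)). split; [lia|].
      pose proof (rho_bounds y z M n). unfold P4.G.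
      assert (INR (S n) * d <= INR (S n) * rho y z M n) by (apply Rmult_le_compat_l; [apply pos_INR|lra]).
      rewrite !S_INR in *. pose proof (pos_INR n). nra. }
    pose proof (UE C A1 y z M A1_ne Hc (d/2) ltac:(lra) HG) as HF.
    apply LS_pos_iff. exists (d/16). split; [lra|]. intros N.
    destruct (nat_above (16 / d)) as [N2 HN2].
    destruct (HF (N + N2 + 2)%nat) as [m [Hm1 Hm2]].
    destruct m as [|[|n]]; [lia|lia|]. exists n. split; [lia|].
    pose proof (rho_bounds t z M n). unfold P4.F in Hm2.
    assert (1 <= d / 16 * INR (S (S n))).
    { assert (16 / d <= INR (S (S n))) by (assert (INR N2 <= INR (S (S n))) by (apply le_INR; lia); lra).
      apply Rmult_le_compat_l with (r := d/16) in H0; [|lra].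
      replace (d / 16 * (16 / d)) with 1 in H0 by (field; lra). lra. }
    assert (Sp : 0 < INR (S n)) by (apply lt_0_INR; lia).
    apply (Rmult_le_reg_l (INR (S n))); auto.
    rewrite !S_INR in *. nra.
Qed.

Lemma L_equiv : Rbar_lt 0 (LimInf_seq (rho t z M)) <-> Rbar_lt 0 (LimInf_seq (rho y z M)).
Proof.
  split.
  - intros Ht. apply NNPP. intros Hy.
    assert (HG : forall e, 0 < e -> forall N, exists m, (N <= m)%nat /\ G m <= e * INR m + 1).
    { intros e He N. destruct (LI_not_pos _ Hy e He N) as [n [Hn1 Hn2]].
      exists (S (S n)). split; [lia|]. pose proof (rho_bounds y z M n). unfold P4.G.
      assert (INR (S n) * rho y z M n <= INR (S n) * e) by (apply Rmult_le_compat_l; [apply pos_INR|lra]).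
      rewrite !S_INR in *. pose proof (pos_INR n). nra. }
    apply LI_pos_iff in Ht. destruct Ht as [d [Hd [N1 HN1]]].
    destruct (LE C A1 y z M A1_ne Hc HG (d/4) ltac:(lra) (N1 + 2)%nat) as [m [Hm1 Hm2]].
    destruct m as [|[|n]]; [lia|lia|].
    pose proof (rho_bounds t z M n). specialize (HN1 n ltac:(lia)). unfold P4.F in Hm2.
    assert (INR (S n) * d <= INR (S n) * rho t z M n) by (apply Rmult_le_compat_l; [apply pos_INR|lra]).
    rewrite !S_INR in *. pose proof (pos_INR n). nra.
  - intros Hy. apply LI_pos_iff in Hy. destruct Hy as [d [Hd [N1 HN1]]].
    assert (HG : forall m, d / 2 * INR m - d / 2 * (INR N1 + 2) <= G m).
    { intros m. destruct (le_lt_dec (N1 + 2) m) as [h|h].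
      - destruct m as [|[|n]]; [lia|lia|]. pose proof (rho_bounds y z M n). specialize (HN1 n ltac:(lia)).
        unfold P4.G.
        assert (INR (S n) * d <= INR (S n) * rho y z M n) by (apply Rmult_le_compat_l; [apply pos_INR|lra]).
        rewrite !S_INR in *. pose proof (pos_INR n). pose proof (pos_INR N1). nra.
      - pose proof (cnt_bounds (Occ z M y) 0 m). unfold P4.G.
        assert (INR m <= INR N1 + 2) by (rewrite <- INR_plus2; apply le_INR; lia).
        assert (d / 2 * INR m <= d / 2 * (INR N1 + 2)) by (apply Rmult_le_compat_l; lra). lra. }
    destruct (LH C A1 y z M A1_ne Hc (d/2) (d / 2 * (INR N1 + 2)) ltac:(lra) HG) as [d' [Hd' [N0 HN0]]].
    apply LI_pos_iff. exists (d'/2). split; [lra|].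
    destruct (nat_above (2 / d')) as [N2 HN2].
    exists (N0 + N2)%nat. intros n Hn.
    pose proof (rho_bounds t z M n). specialize (HN0 (S (S n)) ltac:(lia)). unfold P4.F in HN0.
    assert (1 <= d' / 2 * INR (S n)).
    { assert (2 / d' <= INR (S n)) by (assert (INR N2 <= INR (S n)) by (apply le_INR; lia); lra).
      apply Rmult_le_compat_l with (r := d'/2) in H0; [|lra].
      replace (d' / 2 * (2 / d')) with 1 in H0 by (field; lra). lra. }
    assert (Sp : 0 < INR (S n)) by (apply lt_0_INR; lia).
    apply (Rmult_le_reg_l (INR (S n))); auto.
    rewrite !S_INR in *. nra.
Qed.

End Equiv.

End P9.
Import P9.

Module P10.
Open Scope R_scope.

Lemma run_of_notPi k L z : inSigma k z -> ~ PiL k L z -> exists i0, forall j, (j < L)%nat -> z (i0 + j)%nat = z i0.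
Proof.
  intros Hs Hn. apply NNPP. intros Hc. apply Hn. split; auto. intros i Hi. apply Hc. exists i. auto.
Qed.

Lemma noOcc k L x z i0 : PiL k L x -> (forall j, (j < L)%nat -> z (i0 + j)%nat = z i0) ->
  forall p, ~ Occ z (i0 + L) x p.
Proof.
  intros [_ Hx] Hr p HO. apply (Hx (p + i0)%nat). intros j Hj.
  replace (p + i0 + j)%nat with (p + (i0 + j))%nat by lia. rewrite (HO (i0 + j)%nat) by lia.
  rewrite Hr by auto. replace (p + i0)%nat with (p + (i0 + 0))%nat by lia.
  rewrite (HO (i0 + 0)%nat) by lia. rewrite Nat.add_0_r. reflexivity.
Qed.

Lemma shift_PiL k L x n : PiL k L x -> PiL k L (shiftn n x).
Proof.
  intros [Hs Hx]. split.
  - intros i. apply Hs.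
  - intros i Hi. apply (Hx (i + n)%nat). intros j Hj. specialize (Hi j Hj). unfold shiftn in Hi.
    replace (i + n + j)%nat with (i + j + n)%nat by lia. auto.
Qed.

Theorem main_thm (k L : nat) (C : nat -> list nat) (A1 : list nat) (y : seqn) :
  (2 <= k)%nat -> (3 <= L)%nat ->
  (forall n, word_in (PiL k L) (C n)) ->
  (forall w, word_in (PiL k L) w -> exists n, C n = w) ->
  (forall n m, C n = C m -> n = m) ->
  (forall a, In a A1 -> (a < k)%nat) ->
  ~ word_in (PiL k L) A1 ->
  is_lim_seq (fun n => INR (length (C n)) / INR (length (Aw C A1 y n))) 0 ->
  Trans k L y ->
  (forall xi z, omega_xi k xi (Tmap C A1 y) z <-> omega_xi k xi y z) /\
  ((forall z, omega_sigma y z -> omega_sigma (Tmap C A1 y) z) /\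
   exists z, omega_sigma (Tmap C A1 y) z /\ ~ omega_sigma y z).
Proof.
  intros Hk HL HCw HCs HCi HA1k HA1 Hlim [HyPi HyT].
  assert (A1_ne : A1 <> nil).
  { intros E. apply HA1. subst. exists x1. split; [apply x1_PiL; lia|]. intros i Hi; simpl in Hi; lia. }
  assert (Hc : forall e, 0 < e -> exists N, forall n, (N <= n)%nat -> INR (cc C n) <= e * INR (PP C A1 y n)).
  { intros e He. apply is_lim_seq_spec in Hlim. destruct (Hlim (mkposreal e He)) as [N HN].
    exists N. intros n Hn. specialize (HN n Hn). simpl in HN.
    pose proof (P_ge1 C A1 y A1_ne n) as P1. unfold PP, cc in *.
    rewrite Rminus_0_r in HN. apply Rabs_def2 in HN. destruct HN as [HN _].
    apply (Rmult_lt_compat_r (INR (length (Aw C A1 y n)))) in HN; [|lra].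
    unfold Rdiv in HN. rewrite Rmult_assoc, Rinv_l in HN by lra. lra. }
  change (Tmap C A1 y) with (tt C A1 y).
  set (t := tt C A1 y).
  assert (Cy : Cont k L y).
  { intros w Hw M. apply HyT in Hw. assert (He : 0 < / 2 ^ M) by (apply Rinv_0_lt_compat, pow_lt; lra).
    destruct (Hw _ He 1%nat) as [n [Hn Hd]]. exists n. split; auto. intros i Hi.
    pose proof (dist_lt_prefix _ _ _ Hd i Hi). unfold shiftn in H. rewrite Nat.add_comm. auto. }
  assert (WI : forall w M, PiL k L w -> word_in (PiL k L) (prefixw w M)).
  { intros w M Hw. exists w. split; auto. intros i Hi. rewrite length_prefixw in Hi.
    rewrite nth_prefixw; auto. }
  assert (tC : forall w M, PiL k L w -> exists j, forall i, (i < M)%nat -> t (PP C A1 y j + i)%nat = w i).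
  { intros w M Hw. destruct (HCs _ (WI w M Hw)) as [j Hj]. exists j. intros i Hi.
    unfold t. rewrite (tt_C C A1 y A1_ne); auto.
    - rewrite Hj. apply nth_prefixw; auto.
    - unfold cc. rewrite Hj, length_prefixw. auto. }
  assert (Ct : Cont k L t).
  { intros w Hw M. destruct (tC w M Hw) as [j Hj]. exists (PP C A1 y j). split; auto.
    apply PP_pos; auto. }
  split.
  - intros xi z. destruct xi; unfold omega_xi; split; intros [Hz H]; split; auto.
    + apply red_U. intros M. apply (U_equiv C A1 y z M A1_ne Hc). apply red_U. exact H.
    + apply red_U. intros M. apply (U_equiv C A1 y z M A1_ne Hc). apply red_U. exact H.
    + apply red_L. intros M. apply (L_equiv C A1 y z M A1_ne Hc). apply red_L. exact H.
    + apply red_L. intros M. apply (L_equiv C A1 y z M A1_ne Hc). apply red_L. exact H.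
    + destruct (classic (PiL k L z)) as [Pz|Pz].
      * apply (BU_pos k L); auto.
      * exfalso. destruct (run_of_notPi k L z Hz Pz) as [i0 Hi0].
        assert (He : 0 < / 2 ^ (i0 + L)) by (apply Rinv_0_lt_compat, pow_lt; lra).
        apply (BU_zero_of_count t z (i0 + L)); [|apply H; auto].
        replace (i0 + L)%nat with (S (i0 + L - 1)) by lia.
        apply (win_bound C A1 y z (i0 + L - 1) A1_ne).
        -- replace (S (i0 + L - 1)) with (i0 + L)%nat by lia. apply (noOcc k L y z i0); auto.
        -- intros n i Hi HO. replace (S (i0 + L - 1)) with (i0 + L)%nat in * by lia.
           destruct (HCw n) as [xw [Hxw Hxn]].
           apply (noOcc k L xw z i0 Hxw Hi0 i). intros j Hj.
           rewrite <- (HO j Hj). fold t. unfold t. rewrite <- Nat.add_assoc. rewrite (tt_C C A1 y A1_ne) by lia.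
           apply Hxn. unfold cc in Hi. lia.
        -- exact Hc.
    + destruct (classic (PiL k L z)) as [Pz|Pz].
      * apply (BU_pos k L); auto.
      * exfalso. destruct (run_of_notPi k L z Hz Pz) as [i0 Hi0].
        assert (He : 0 < / 2 ^ (i0 + L)) by (apply Rinv_0_lt_compat, pow_lt; lra).
        apply (BU_zero_of_count y z (i0 + L)); [|apply H; auto].
        intros e He'. exists 0. intros a m. rewrite cnt_zero.
        assert (0 <= e * INR m) by (apply Rmult_le_pos; [lra|apply pos_INR]). lra.
        intros i Hi. apply (noOcc k L y z i0); auto.
    + exfalso. destruct (BL_zero k L t z Ct Hk HL) as [eps [He Hn]]. apply Hn, H, He.
    + exfalso. destruct (BL_zero k L y z Cy Hk HL) as [eps [He Hn]]. apply Hn, H, He.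
  - split.
    + intros z Hz. apply HyT in Hz. intros eps He N.
      destruct (small_pow eps He) as [M HM].
      destruct (HCs _ (WI z M Hz)) as [j Hj].
      set (n := S (j + N)).
      exists (PP C A1 y n + (cc C n + S n * (PP C A1 y n * PP C A1 y n)) + PP C A1 y j)%nat.
      split. { pose proof (PP_gt C A1 y A1_ne n). unfold n in *. lia. }
      eapply Rle_lt_trans; [|exact HM]. apply dist_prefix_le. intros i Hi. unfold shiftn.
      assert (Hlen : length (C j) = M) by (rewrite Hj; apply length_prefixw).
      assert (Hlt : (PP C A1 y j + i < PP C A1 y n)%nat).
      { pose proof (PP_mono C A1 y (S j) n ltac:(unfold n; lia)). rewrite PP_S in H. unfold cc in H. lia. }
      replace (i + _)%nat with (PP C A1 y n + (cc C n + S n * (PP C A1 y n * PP C A1 y n)) + (PP C A1 y j + i))%nat by lia.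
      unfold t. rewrite (tt_A C A1 y A1_ne) by auto. rewrite (tt_C C A1 y A1_ne) by (unfold cc; lia).
      rewrite Hj. apply nth_prefixw; auto.
    + exists t. split.
      * intros eps He N. destruct (small_pow eps He) as [M HM].
        set (n := (M + N)%nat).
        exists (PP C A1 y n + (cc C n + S n * (PP C A1 y n * PP C A1 y n)))%nat.
        split. { pose proof (PP_gt C A1 y A1_ne n). unfold n in *. lia. }
        eapply Rle_lt_trans; [|exact HM]. apply dist_prefix_le. intros i Hi. unfold shiftn.
        pose proof (PP_gt C A1 y A1_ne n).
        rewrite Nat.add_comm. unfold t. apply (tt_A C A1 y A1_ne). unfold n in *. lia.
      * intros Ht. apply HyT in Ht. apply HA1. exists t. split; auto. intros i Hi.
        unfold t. rewrite (tt_prefix C A1 y A1_ne 0) by (unfold PP; simpl; auto). reflexivity.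
Qed.

End P10.
Import P10.

Open Scope R_scope.

Theorem lemma5p3 (k L : nat) (C : nat -> list nat) (A1 : list nat) (y : seqn) :
  (2 <= k)%nat -> (3 <= L)%nat ->
  (* C is an enumeration of all finite words contained in Pi_L *)
  (forall n, word_in (PiL k L) (C n)) ->
  (forall w, word_in (PiL k L) w -> exists n, C n = w) ->
  (forall n m, C n = C m -> n = m) ->
  (* A_1 is a finite word over {0,...,k-1} not contained in Pi_L *)
  (forall a, In a A1 -> (a < k)%nat) ->
  ~ word_in (PiL k L) A1 ->
  (* |C_n| = o(|A_n|) *)
  is_lim_seq (fun n => INR (length (C n)) / INR (length (Aw C A1 y n))) 0 ->
  Trans k L y ->
  (forall xi z, omega_xi k xi (Tmap C A1 y) z <-> omega_xi k xi y z) /\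
  ((forall z, omega_sigma y z -> omega_sigma (Tmap C A1 y) z) /\
   exists z, omega_sigma (Tmap C A1 y) z /\ ~ omega_sigma y z).
Proof.
  exact (main_thm k L C A1 y).
Qed.
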